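(* Let $k\ge1$ be the cache size and $H_k=\sum_{j=1}^k 1/j$. In both the discard-predictions setup and the phase-predictions setup, for every constant $\epsilon>0$ and all values $\beta,\gamma$, no (possibly randomized) online paging algorithm is $(2,H_k-2-\epsilon,\gamma)$-competitive, and none is $\big(2,\beta,\frac{H_k-2}{k-1}-\epsilon\big)$-competitive.
   Context: Paging: there is a universe $U$ of pages and a cache holding at most $k$ pages. Requests $r_1,\dots,r_n\in U$ arrive online. If the requested page is not in the cache (a page fault), it must be loaded, evicting a cached page if the cache holds $k$ pages. The cost is the number of page faults; $\mathrm{OPT}(I)$ is the minimum offline cost on request sequence $I$. Along with each request $r_i$ the online algorithm receives a prediction bit $p_i\in\{0,1\}$ (which may be arbitrary). An algorithm is $(\alpha,\beta,\gamma)$-competitive (with $\alpha,\beta,\gamma\ge0$) if there is a constant $b$ (possibly depending on $k$) such that for every instance $I$ and all predictions $p$, $\mathbb{E}[\mathrm{ALG}(I,p)]\le \alpha\,\mathrm{OPT}(I)+\beta\,\eta_0+\gamma\,\eta_1+b$, the expectation being over the algorithm's randomness. Discard-predictions setup: fix the optimal offline algorithm LFD (on a fault with full cache, evict a cached page never requested again if one exists, otherwise the cached page whose next request is furthest in the future; ties broken by a fixed rule). Ground truth: $p_i^*=0$ if LFD keeps $r_i$ in cache until its next request (or to the end if none), $p_i^*=1$ if LFD evicts $r_i$ before it is requested again. Errors: $\eta_h=|\{i\in[n]: p_i=h,\ p_i^*=1-h\}|$. Phase-predictions setup: partition the requests into $k$-phases (the first starts at $r_1$; each phase is a maximal contiguous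 segment with at most $k$ distinct pages; the next starts right after). For $r_i$ in phase $j$: $p_i^*=0$ if page $r_i$ is requested in phase $j+1$, else $p_i^*=1$. Errors: $\eta_h$ = number of counted requests $i$ with $p_i=h$, $p_i^*=1-h$, where counted requests are, for each non-last phase $j$ and each page requested in phase $j$, only the last request to that page within phase $j$. *)

(* Defs.v *)
From HB Require Import structures.
From mathcomp Require Import all_boot all_order all_algebra.
From mathcomp Require Import reals.
Set Implicit Arguments. Unset Strict Implicit. Unset Printing Implicit Defensive.
Import Order.TTheory GRing.Theory Num.Theory.
Local Open Scope ring_scope.

(* A cache is a duplicate-free
   [seq nat] of size at most k. Requests with predictions: [seq (nat * bool)],
   the bool being the prediction bit (false = 0, true = 1). *)

(* Behavioral randomization: given the full history (past requests, past
   predictions, and the cache after each past step, i.e. the past random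
   outcomes), the current cache, the current request r and prediction p,
   [A h C r p x] is the probability of evicting page x (used on a fault with
   full cache). *)
Definition alg (R : realType) :=
  seq (nat * bool * seq nat) -> seq nat -> nat -> bool -> nat -> R.

Definition valid_alg (R : realType) (k : nat) (A : alg R) : Prop :=
  forall h C r p, uniq C -> size C = k -> r \notin C ->
    (forall x, 0 <= A h C r p x) /\ \sum_(x <- C) A h C r p x = 1.

Fixpoint exp_cost (R : realType) (k : nat) (A : alg R)
    (h : seq (nat * bool * seq nat)) (C : seq nat) (s : seq (nat * bool)) : R :=
  match s with
  | [::] => 0
  | (r, p) :: s' =>
      if r \in C then exp_cost k A (rcons h (r, p, C)) C s'
      else if (size C < k)%N then
        1 + exp_cost k A (rcons h (r, p, r :: C)) (r :: C) s'
      else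
        1 + \sum_(x <- C) A h C r p x *
              exp_cost k A (rcons h (r, p, r :: rem x C)) (r :: rem x C) s'
  end.

Fixpoint opt_cost (k : nat) (C : seq nat) (rs : seq nat) : nat :=
  match rs with
  | [::] => 0
  | r :: rs' =>
      if r \in C then opt_cost k C rs'
      else if (size C < k)%N then (opt_cost k (r :: C) rs').+1
      else
        let l := [seq opt_cost k (r :: rem x C) rs' | x <- C] in
        (foldr minn (head 0%N l) l).+1
  end.

(* tb chooses among the (sorted) candidate pages never requested again. *)
Definition valid_tb (tb : seq nat -> nat) : Prop :=
  forall s : seq nat, s != [::] -> tb s \in s.

Definition lfd_victim (tb : seq nat -> nat) (C fut : seq nat) : nat :=
  let cand := [seq x <- C | x \notin fut] in
  if cand != [::] then tb (sort leq cand)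
  else foldr (fun x y => if (index y fut < index x fut)%N then x else y)
             (head 0%N C) C.

Fixpoint lfd_caches (k : nat) (tb : seq nat -> nat) (C : seq nat)
    (rs : seq nat) : seq (seq nat) :=
  match rs with
  | [::] => [::]
  | r :: rs' =>
      let C' := if r \in C then C
                else if (size C < k)%N then r :: C
                else r :: rem (lfd_victim tb C rs') C in
      C' :: lfd_caches k tb C' rs'
  end.

(* p*_i (0-indexed i) in the discard-predictions setup: true (=1) iff LFD
   evicts r_i before its next request (or before the end if none). *)
Definition pstar_discard (k : nat) (tb : seq nat -> nat) (rs : seq nat)
    (i : nat) : bool :=
  let r := nth 0%N rs i in
  let nxt := (i.+1 + index r (drop i.+1 rs))%N in
  let cs := lfd_caches k tb [::] rs in
  has (fun j => r \notin nth [::] cs j) (index_iota i.+1 nxt).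

(* eta_h for the discard setup: eta s false = eta_0, eta s true = eta_1 *)
Definition eta_discard (k : nat) (tb : seq nat -> nat)
    (s : seq (nat * bool)) (hb : bool) : nat :=
  let rs := unzip1 s in let ps := unzip2 s in
  count (fun i => (nth false ps i == hb) && (pstar_discard k tb rs i == ~~ hb))
        (iota 0 (size s)).

(* phase index of each request (greedy maximal segments with <= k distinct
   pages, the first one starting at r_1) *)
Fixpoint phase_ids (k : nat) (cur : seq nat) (j : nat) (rs : seq nat)
    : seq nat :=
  match rs with
  | [::] => [::]
  | r :: rs' =>
      if r \in cur then j :: phase_ids k cur j rs'
      else if (size cur < k)%N then j :: phase_ids k (r :: cur) j rs'
      else j.+1 :: phase_ids k [:: r] j.+1 rs'
  end.

(* request i is counted: its phase j is not the last phase, and i is the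
   last request to page r_i within phase j *)
Definition counted_phase (k : nat) (rs : seq nat) (i : nat) : bool :=
  let ph := phase_ids k [::] 0 rs in
  let j := nth 0%N ph i in let r := nth 0%N rs i in
  has (fun i' => nth 0%N ph i' == j.+1) (iota 0 (size rs)) &&
  ~~ has (fun i' => (nth 0%N ph i' == j) && (nth 0%N rs i' == r))
         (iota i.+1 (size rs - i.+1)).

(* p*_i = 0 (false) iff page r_i is requested in the next phase *)
Definition pstar_phase (k : nat) (rs : seq nat) (i : nat) : bool :=
  let ph := phase_ids k [::] 0 rs in
  let j := nth 0%N ph i in let r := nth 0%N rs i in
  ~~ has (fun i' => (nth 0%N ph i' == j.+1) && (nth 0%N rs i' == r))
         (iota 0 (size rs)).

Definition eta_phase (k : nat) (s : seq (nat * bool)) (hb : bool) : nat :=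
  let rs := unzip1 s in let ps := unzip2 s in
  count (fun i => [&& counted_phase k rs i, nth false ps i == hb
                    & pstar_phase k rs i == ~~ hb])
        (iota 0 (size s)).

Definition competitive (R : realType) (k : nat)
    (eta : seq (nat * bool) -> bool -> nat) (A : alg R) (a b c : R) : Prop :=
  [/\ 0 <= a, 0 <= b, 0 <= c &
    exists b0 : R, forall s : seq (nat * bool),
      exp_cost k A [::] [::] s <=
        a * (opt_cost k [::] (unzip1 s))%:R + b * (eta s false)%:R
          + c * (eta s true)%:R + b0].

Definition harmonic (R : realType) (k : nat) : R :=
  \sum_(1 <= j < k.+1) (j%:R)^-1.

(* Main.v *)
Require Import Defs.
From HB Require Import structures.
From mathcomp Require Import all_boot all_order all_algebra.
From mathcomp Require Import reals.
From mathcomp Require Import zify ring lra.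
Set Implicit Arguments. Unset Strict Implicit. Unset Printing Implicit Defensive.
Import Order.TTheory GRing.Theory Num.Theory.
Local Open Scope ring_scope.

Definition hist := seq (nat * bool * seq nat).

Fixpoint ev (R : realType) (k : nat) (A : alg R) (h : hist) (C : seq nat)
   (s : seq (nat * bool)) (f : hist -> seq nat -> R) : R :=
  match s with
  | [::] => f h C
  | (r, p) :: s' =>
      if r \in C then ev k A (rcons h (r, p, C)) C s' f
      else if (size C < k)%N then ev k A (rcons h (r, p, r :: C)) (r :: C) s' f
      else \sum_(x <- C) A h C r p x *
             ev k A (rcons h (r, p, r :: rem x C)) (r :: rem x C) s' f
  end.

Lemma exp_cost_cat (R : realType) k (A : alg R) s u h C :
  exp_cost k A h C (s ++ u) =
  exp_cost k A h C s + ev k A h C s (fun h' C' => exp_cost k A h' C' u).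
Proof.
elim: s h C => [|[r p] s IH] h C /=; first by rewrite add0r.
case: ifP => _; first exact: IH.
case: ifP => _; first by rewrite IH addrA.
rewrite -addrA; congr (1 + _); rewrite -big_split /=.
by apply: eq_bigr => x _; rewrite IH mulrDr.
Qed.

Lemma ev_cat (R : realType) k (A : alg R) s u h C f :
  ev k A h C (s ++ u) f = ev k A h C s (fun h' C' => ev k A h' C' u f).
Proof.
elim: s h C => [|[r p] s IH] h C //=.
case: ifP => _; first exact: IH.
case: ifP => _; first exact: IH.
by apply: eq_bigr => x _; rewrite IH.
Qed.

Lemma ev_ext (R : realType) k (A : alg R) s h C (f g : hist -> seq nat -> R) :
  (forall h C, f h C = g h C) -> ev k A h C s f = ev k A h C s g.
Proof.
move=> fg; elim: s h C => [|[r p] s IH] h C //=.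
case: ifP => _; first exact: IH.
case: ifP => _; first exact: IH.
by apply: eq_bigr => x _; rewrite IH.
Qed.

Lemma ev_add (R : realType) k (A : alg R) s h C (f g : hist -> seq nat -> R) :
  ev k A h C s (fun h C => f h C + g h C) = ev k A h C s f + ev k A h C s g.
Proof.
elim: s h C => [|[r p] s IH] h C //=.
case: ifP => _; first exact: IH.
case: ifP => _; first exact: IH.
by rewrite -big_split /=; apply: eq_bigr => x _; rewrite IH mulrDr.
Qed.

Lemma ev_zero (R : realType) k (A : alg R) s h C :
  ev k A h C s (fun _ _ => 0) = 0.
Proof.
elim: s h C => [|[r p] s IH] h C //=.
case: ifP => _; first exact: IH.
case: ifP => _; first exact: IH.
by rewrite big1 // => x _; rewrite IH mulr0.
Qed.

Lemma ev_sum (R : realType) k (A : alg R) s h C (L : seq nat)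
   (F : nat -> hist -> seq nat -> R) :
  ev k A h C s (fun h C => \sum_(y <- L) F y h C) =
  \sum_(y <- L) ev k A h C s (F y).
Proof.
elim: L => [|y L IH].
  transitivity (ev k A h C s (fun _ _ => 0)).
    by apply: ev_ext => h' C'; rewrite big_nil.
  by rewrite ev_zero big_nil.
rewrite big_cons -IH -ev_add; apply: ev_ext => h' C'; by rewrite big_cons.
Qed.

Definition InvU (k : nat) (C : seq nat) : bool :=
  [&& uniq C, size C == k & all (fun y => y < k.+1)%N C].

Definition reqU (k : nat) (s : seq (nat * bool)) : bool :=
  all (fun q => q.1 < k.+1)%N s.

Lemma InvU_step k C r x : InvU k C -> (r < k.+1)%N -> r \notin C -> x \in C ->
  InvU k (r :: rem x C).
Proof.
case/and3P => uC /eqP sC aC rk rC xC; apply/and3P; split.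
- rewrite /= rem_uniq // andbT; apply: contra rC; exact: mem_rem.
- have : (0 < size C)%N by case: (C) xC.
  by rewrite /= size_rem // sC => k0; rewrite prednK.
- rewrite /= rk /=; apply/allP => y /mem_rem yC; exact: (allP aC).
Qed.

Lemma InvU_full k C : InvU k C -> (size C < k)%N = false.
Proof. by case/and3P => _ /eqP -> _; rewrite ltnn. Qed.

Lemma lersum (R : realType) (I : eqType) (r : seq I) (F G : I -> R) :
  (forall i, i \in r -> F i <= G i) -> \sum_(i <- r) F i <= \sum_(i <- r) G i.
Proof. move=> H; rewrite big_seq [X in _ <= X]big_seq; apply: ler_sum => i; exact: H. Qed.

Lemma ev_mono (R : realType) k (A : alg R) s h C (f g : hist -> seq nat -> R) :
  valid_alg k A -> InvU k C -> reqU k s ->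
  (forall h C, InvU k C -> f h C <= g h C) ->
  ev k A h C s f <= ev k A h C s g.
Proof.
move=> vA + + fg; elim: s h C => [|[r p] s IH] h C IC /=; first by move=> _; exact: fg.
case/andP => /= rk rs.
case: ifPn => rC; first exact: IH.
rewrite InvU_full //.
apply: lersum => x xC.
have [A0 _] : (forall x, 0 <= A h C r p x) /\ \sum_(x <- C) A h C r p x = 1.
  by case/and3P: IC => uC /eqP sC _; apply: vA.
apply: ler_wpM2l => //; apply: IH => //; exact: InvU_step.
Qed.

Lemma ev_ext_inv (R : realType) k (A : alg R) s h C (f g : hist -> seq nat -> R) :
  valid_alg k A -> InvU k C -> reqU k s ->
  (forall h C, InvU k C -> f h C = g h C) ->
  ev k A h C s f = ev k A h C s g.
Proof.
move=> vA IC rs fg; apply/le_anti/andP; split; apply: ev_mono => // h' C' I'.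
  by rewrite fg.
by rewrite fg.
Qed.

Lemma ev_const (R : realType) k (A : alg R) s h C (c : R) :
  valid_alg k A -> InvU k C -> reqU k s ->
  ev k A h C s (fun _ _ => c) = c.
Proof.
move=> vA; elim: s h C => [|[r p] s IH] h C IC //=.
case/andP => /= rk rs.
case: ifPn => rC; first exact: IH.
rewrite InvU_full //.
have [_ A1] : (forall x, 0 <= A h C r p x) /\ \sum_(x <- C) A h C r p x = 1.
  by case/and3P: IC => uC /eqP sC _; apply: vA.
rewrite (eq_big_seq (fun x => A h C r p x * c)); last first.
  by move=> x xC; rewrite IH //; exact: InvU_step.
by rewrite -mulr_suml A1 mul1r.
Qed.

Lemma exp_cost_ge0 (R : realType) k (A : alg R) s h C :
  valid_alg k A -> InvU k C -> reqU k s -> 0 <= exp_cost k A h C s.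
Proof.
move=> vA; elim: s h C => [|[r p] s IH] h C IC //=.
case/andP => /= rk rs.
case: ifPn => rC; first exact: IH.
rewrite InvU_full //.
have [A0 _] : (forall x, 0 <= A h C r p x) /\ \sum_(x <- C) A h C r p x = 1.
  by case/and3P: IC => uC /eqP sC _; apply: vA.
apply: addr_ge0 => //; rewrite big_seq; apply: sumr_ge0 => x xC; apply: mulr_ge0 => //.
apply: IH => //; exact: InvU_step.
Qed.

Lemma exp_cost1 (R : realType) k (A : alg R) h C y p :
  exp_cost k A h C [:: (y, p)] = (y \notin C)%:R.
Proof.
rewrite /=; case: ifP => _ //; case: ifP => _; first by rewrite addr0.
by rewrite big1 ?addr0 // => x _; rewrite mulr0.
Qed.

Definition hole (R : realType) k (A : alg R) h C t y : R :=
  ev k A h C t (fun _ C' => (y \notin C')%:R).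

Lemma cost_rcons (R : realType) k (A : alg R) h C t y p :
  exp_cost k A h C (rcons t (y, p)) = exp_cost k A h C t + hole k A h C t y.
Proof.
rewrite -cats1 exp_cost_cat; congr (_ + _); apply: ev_ext => h' C'.
exact: exp_cost1.
Qed.

Lemma sumr_count (R : realType) (T : Type) (P : pred T) (S : seq T) :
  \sum_(m <- S) ((P m)%:R : R) = (count P S)%:R.
Proof.
elim: S => [|x S IH]; first by rewrite big_nil.
by rewrite big_cons IH /= natrD.
Qed.

Lemma count_notin_U k C : InvU k C ->
  count (fun y => y \notin C) (iota 0 k.+1) = 1%N.
Proof.
case/and3P => uC /eqP sC aC.
have := count_predC (fun y => y \in C) (iota 0 k.+1).
have -> : count (fun y => y \in C) (iota 0 k.+1) = k.
  transitivity (size C); last exact: sC.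
  rewrite -size_filter; apply: perm_size; apply: uniq_perm.
  - by rewrite filter_uniq // iota_uniq.
  - by [].
  move=> y; rewrite mem_filter; apply/andP/idP => [[]//|yC]; split => //.
  rewrite mem_iota add0n /=; exact: (allP aC).
rewrite size_iota => /eqP; rewrite -{2}(addn1 k) eqn_add2l => /eqP <-.
by apply: eq_count.
Qed.

Lemma hole_sum (R : realType) k (A : alg R) h C t :
  valid_alg k A -> InvU k C -> reqU k t ->
  \sum_(y <- iota 0 k.+1) hole k A h C t y = 1.
Proof.
move=> vA IC rt; rewrite /hole -ev_sum.
transitivity (ev k A h C t (fun _ _ => 1)); last by rewrite ev_const.
apply: ev_ext_inv => // h' C' IC'.
by rewrite sumr_count count_notin_U.
Qed.

Lemma hole_ge0 (R : realType) k (A : alg R) h C t y :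
  valid_alg k A -> InvU k C -> reqU k t -> 0 <= hole k A h C t y.
Proof.
move=> vA IC rt; rewrite -(@ev_const R k A t h C 0 vA IC rt); apply: ev_mono => // ? ? _; rewrite ler0n.
Qed.

Lemma hole_le1 (R : realType) k (A : alg R) h C t y :
  valid_alg k A -> InvU k C -> reqU k t -> hole k A h C t y <= 1.
Proof.
move=> vA IC rt; rewrite -(@ev_const R k A t h C 1 vA IC rt); apply: ev_mono => // h' C' _; by case: (y \notin C'); rewrite ?ler01 ?lexx.
Qed.

Lemma count_step (S : seq nat) C r x : uniq (rcons S r) -> uniq C ->
  (count (fun m => m \notin r :: rem x C) (rcons S r) <=
   count (fun m => m \notin C) S + 1)%N.
Proof.
move=> uS uC; rewrite -cats1 count_cat /= inE eqxx /= !addn0.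
apply: (@leq_trans (count (predU (fun m => m \notin C) (pred1 x)) S)).
  apply: sub_count => m; rewrite /= inE negb_or => /andP[_].
  rewrite (mem_rem_uniq _ uC) !inE; by case: (m == x); case: (m \in C).
rewrite -(leq_add2r (count (predI (fun m => m \notin C) (pred1 x)) S)).
rewrite count_predUI -addnA leq_add2l.
apply: (@leq_trans 1); last exact: leq_addr.
have uS' : uniq S by move: uS; rewrite -cats1 cat_uniq => /andP[].
by rewrite count_uniq_mem // leq_b1.
Qed.

Lemma sweep_bound (R : realType) k (A : alg R) (L : seq (nat * bool)) (S : seq nat) h C :
  valid_alg k A -> InvU k C -> reqU k L -> uniq (S ++ map fst L) ->
  ev k A h C L (fun _ C' => \sum_(m <- S ++ map fst L) ((m \notin C')%:R)) <=
  \sum_(m <- S) ((m \notin C)%:R) + exp_cost k A h C L.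
Proof.
move=> vA; elim: L S h C => [|[r p] L IH] S h C IC.
  by move=> _ _ /=; rewrite cats0 addr0.
case/andP => /= rk rL uSL.
rewrite -cat_rcons in uSL *.
case: ifPn => rC.
  apply: (le_trans (IH _ _ _ IC rL uSL)).
  by rewrite -cats1 big_cat big_seq1 /= rC addr0.
rewrite InvU_full //.
have [A0 A1] : (forall x, 0 <= A h C r p x) /\ \sum_(x <- C) A h C r p x = 1.
  by case/and3P: IC => uC /eqP sC _; apply: vA.
have uS : uniq (rcons S r) by move: uSL; rewrite cat_uniq => /andP[].
have uC : uniq C by case/and3P: IC.
apply: (@le_trans _ _ (\sum_(x <- C) (A h C r p x *
   (\sum_(m <- S) ((m \notin C)%:R) + 1) + A h C r p x *
     exp_cost k A (rcons h (r, p, r :: rem x C)) (r :: rem x C) L))).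
  apply: lersum => x xC; rewrite -mulrDr; apply: ler_wpM2l => //.
  apply: (le_trans (IH _ _ _ (InvU_step IC rk rC xC) rL uSL)).
  rewrite lerD2r !sumr_count (_ : 1 = 1%:R) // -natrD ler_nat; exact: count_step.
by rewrite big_split /= -mulr_suml A1 mul1r addrA.
Qed.

Lemma sweep_cost (R : realType) k (A : alg R) h C t (L : seq (nat * bool)) :
  valid_alg k A -> InvU k C -> reqU k t -> reqU k L -> uniq (map fst L) ->
  \sum_(m <- map fst L) hole k A h C (t ++ L) m <=
  exp_cost k A h C (t ++ L) - exp_cost k A h C t.
Proof.
move=> vA IC rt rL uL; rewrite /hole -ev_sum ev_cat exp_cost_cat [X in _ <= X]addrC addKr.
apply: ev_mono => // h' C' IC'.
have := sweep_bound h' vA IC' rL (S := [::]) uL.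
by rewrite /= big_nil add0r.
Qed.

Local Close Scope ring_scope.
Local Open Scope nat_scope.

Ltac norm_size := repeat match goal with
 | |- context [@size ?T ?s] => lazymatch T with nat => fail | _ => change (@size T s) with (@size nat s) end
 | H : context [@size ?T ?s] |- _ => lazymatch T with nat => fail | _ => change (@size T s) with (@size nat s) in H end
 end.
Ltac slia := norm_size; lia.

Lemma index_iota_cat m n p : (m <= n <= p)%N ->
  index_iota m p = index_iota m n ++ index_iota n p.
Proof.
case/andP => mn np; rewrite /index_iota.
have -> : (p - m = (n - m) + (p - n))%N by slia.
rewrite iotaD; congr (_ ++ iota _ _); slia.
Qed.

Lemma iota_shift a b : iota a b = map (addn a) (iota 0 b).
Proof. by rewrite -iotaDl addn0. Qed.

Lemma count_iota_add (P : pred nat) a b :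
  count P (iota 0 (a + b)) = (count P (iota 0 a) + count (fun i => P (a + i)) (iota 0 b))%N.
Proof. by rewrite iotaD count_cat add0n (iota_shift a b) count_map. Qed.

Lemma has_iota_add (P : pred nat) a b :
  has P (iota 0 (a + b)) = has P (iota 0 a) || has (fun i => P (a + i)) (iota 0 b).
Proof. by rewrite iotaD has_cat add0n (iota_shift a b) has_map. Qed.

Lemma count_nth (T : Type) (x0 : T) (g : pred T) (s : seq T) :
  count (fun q => g (nth x0 s q)) (iota 0 (size s)) = count g s.
Proof. by rewrite -[in RHS](mkseq_nth x0 s) /mkseq count_map. Qed.

Lemma has_nth (T : Type) (x0 : T) (g : pred T) (s : seq T) :
  has (fun q => g (nth x0 s q)) (iota 0 (size s)) = has g s.
Proof. by rewrite -[in RHS](mkseq_nth x0 s) /mkseq has_map. Qed.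

Lemma map_const_nseq (T S : Type) (a : S) (s : seq T) :
  [seq a | _ <- s] = nseq (size s) a.
Proof. by elim: s => //= x s ->. Qed.

Lemma nth_cat_r (T : Type) (x0 : T) (s1 s2 : seq T) i :
  nth x0 (s1 ++ s2) (size s1 + i) = nth x0 s2 i.
Proof. by rewrite nth_cat ltnNge leq_addr /= addKn. Qed.

Lemma nth_cat_l (T : Type) (x0 : T) (s1 s2 : seq T) i :
  (i < size s1)%N -> nth x0 (s1 ++ s2) i = nth x0 s1 i.
Proof. by move=> lt; rewrite nth_cat lt. Qed.

Lemma minn_foldr_le (L : seq nat) d a : a \in L -> (foldr minn d L <= a)%N.
Proof.
elim: L => //= b L IH; rewrite inE => /orP[/eqP ->|aL]; first exact: geq_minl.
exact: leq_trans (geq_minr _ _) (IH aL).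
Qed.

Definition blk := (seq nat * seq nat * nat)%type.
Definition bseq (B : blk) : seq nat := B.1.1 ++ B.1.2.
Definition bpred (b : bool) (B : blk) : seq bool :=
  nseq (size B.1.1) false ++ nseq (size B.1.2) b.
Definition pairs (b : bool) (B : blk) : seq (nat * bool) :=
  [seq (y, false) | y <- B.1.1] ++ [seq (y, b) | y <- B.1.2].

Lemma unzip1_pairs b B : unzip1 (pairs b B) = bseq B.
Proof. by rewrite /unzip1 map_cat -!map_comp !map_id. Qed.

Lemma unzip2_pairs b B : unzip2 (pairs b B) = bpred b B.
Proof. by rewrite /unzip2 map_cat -!map_comp /comp /= !map_const_nseq. Qed.

Lemma size_bpred b B : size (bpred b B) = size (bseq B).
Proof. by rewrite /bpred /bseq size_cat !size_nseq size_cat. Qed.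

Definition goodb (k xp : nat) (B : blk) : bool :=
  [&& B.1.1 != [::], head 0 B.1.1 == xp, all (fun y => y \in B.1.2) B.1.1,
      perm_eq B.1.2 (rem B.2 (iota 0 k.+1)) & (B.2 < k.+1)%N].

Fixpoint goodBs (k xp : nat) (Bs : seq blk) : bool :=
  match Bs with
  | [::] => true
  | B :: Bs' => goodb k xp B && goodBs k B.2 Bs'
  end.

Definition CI (k : nat) (C : seq nat) (xp : nat) : Prop :=
  [/\ uniq C, size C = k & forall y, (y \in C) = (y < k.+1)%N && (y != xp)].

Lemma sw_facts k sw x : perm_eq sw (rem x (iota 0 k.+1)) -> (x < k.+1)%N ->
  [/\ uniq sw, size sw = k & forall y, (y \in sw) = (y < k.+1)%N && (y != x)].
Proof.
move=> P xk; split.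
- by rewrite (perm_uniq P) rem_uniq // iota_uniq.
- by rewrite (perm_size P) size_rem ?size_iota // mem_iota.
- move=> y; rewrite (perm_mem P) (mem_rem_uniq _ (iota_uniq _ _)) inE mem_iota /=.
  by rewrite andbC.
Qed.

Lemma goodb_facts k xp B : goodb k xp B ->
  [/\ B.1.1 = xp :: behead B.1.1, {subset B.1.1 <= B.1.2},
      [/\ uniq B.1.2, size B.1.2 = k & forall y, (y \in B.1.2) = (y < k.+1)%N && (y != B.2)],
      xp \in B.1.2 & (B.2 != xp) && (xp < k.+1)%N].
Proof.
case: B => [[body sw] x] /and5P[/= bn /eqP hb /allP sub P xk].
have [us ss ms] := sw_facts P xk.
have bE : body = xp :: behead body by case: body bn hb sub => //= a l _ ->.
have xpsw : xp \in sw by apply: sub; rewrite bE mem_head.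
move: (xpsw); rewrite ms => /andP[xpk xpx].
split => //; [by rewrite xpk xpx | by rewrite eq_sym xpx xpk].
Qed.

Definition pst (rs : seq nat) (cs : seq (seq nat)) (i : nat) : bool :=
  let r := nth 0 rs i in
  has (fun j => r \notin nth [::] cs j) (index_iota i.+1 (i.+1 + index r (drop i.+1 rs))).

Lemma pst_shift pre rs cpre cs i : size cpre = size pre ->
  pst (pre ++ rs) (cpre ++ cs) (size pre + i) = pst rs cs i.
Proof.
move=> sc; rewrite /pst -!addnS nth_cat_r drop_cat ltnNge leq_addr /= addKn.
rewrite /index_iota !addKn iotaDl has_map; apply: eq_has => j /=.
by rewrite -sc nth_cat_r.
Qed.

Definition etaD (ps : seq bool) (rs : seq nat) (cs : seq (seq nat)) (hb : bool) : nat :=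
  count (fun i => (nth false ps i == hb) && (pst rs cs i == ~~ hb)) (iota 0 (size rs)).

Lemma etaD_cat psB rsB cB ps rs cs hb :
  size psB = size rsB -> size cB = size rsB ->
  etaD (psB ++ ps) (rsB ++ rs) (cB ++ cs) hb =
  (count (fun i => (nth false psB i == hb) && (pst (rsB ++ rs) (cB ++ cs) i == ~~ hb))
     (iota 0 (size rsB)) + etaD ps rs cs hb)%N.
Proof.
move=> sp sc; rewrite /etaD size_cat count_iota_add; congr (_ + _)%N.
  apply: eq_in_count => i; rewrite mem_iota /= => lt.
  by rewrite nth_cat_l // sp.
apply: eq_count => i /=; by rewrite -{1}sp nth_cat_r pst_shift.
Qed.

Lemma lfd_hits k tb C l t : all (fun y => y \in C) l ->
  lfd_caches k tb C (l ++ t) = nseq (size l) C ++ lfd_caches k tb C t.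
Proof. by elim: l => //= r l IH /andP[rC al]; rewrite rC IH. Qed.

Lemma lfd_fill k tb C l t : uniq (l ++ C) -> (size C + size l <= k)%N ->
  exists cpre, [/\ size cpre = size l,
    (forall j, (j < size l)%N -> {subset C <= nth [::] cpre j}),
    (forall o j, (o <= j < size l)%N -> nth 0 l o \in nth [::] cpre j) &
    lfd_caches k tb C (l ++ t) = cpre ++ lfd_caches k tb (rev l ++ C) t].
Proof.
elim: l C => [|r l IH] C /=.
  by move=> _ _; exists [::]; split => //=; intros; slia.
rewrite mem_cat negb_or => /andP[/andP[rl rC] ulC] sk.
have sC : (size C < k)%N by move: sk => /= sk; slia.
rewrite (negbTE rC) sC.
have u' : uniq (l ++ r :: C).
  by rewrite -cat1s uniq_catCA /= mem_cat negb_or rl rC ulC.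
have sk' : (size (r :: C) + size l <= k)%N by rewrite /= addSn -addnS.
have [cp [s1 s2 s3 e]] := IH (r :: C) u' sk'.
exists ((r :: C) :: cp); split.
- by rewrite /= s1.
- move=> [|j] /= jl y yC; first by rewrite inE yC orbT.
  by apply: (s2 j) => //; rewrite inE yC orbT.
- move=> [|o] [|j] //=.
  + by move=> _; exact: mem_head.
  + by move=> jl; apply: (s2 j) => //; exact: mem_head.
  + by move=> H; apply: s3.
- by rewrite e rev_cons cat_rcons.
Qed.

Lemma far_foldr (fut C : seq nat) d :
  let v := foldr (fun x y => if (index y fut < index x fut)%N then x else y) d C in
  v \in d :: C /\ (forall c, c \in C -> (index c fut <= index v fut)%N).
Proof.
elim: C => [|c C [IHm IHi]] /=; first by split => //; rewrite mem_head.
set v := foldr _ d C in IHm IHi *.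
case: ifPn => lt; split.
- by rewrite !inE eqxx orbT.
- move=> c'; rewrite inE => /orP[/eqP->//|c'C].
  exact: leq_trans (IHi _ c'C) (ltnW lt).
- by move: IHm; rewrite !inE => /orP[->//|->]; rewrite !orbT.
- move=> c'; rewrite inE => /orP[/eqP->|c'C]; [by rewrite leqNgt | exact: IHi].
Qed.

Lemma victim_x k tb C xp B t : valid_tb tb -> CI k C xp -> goodb k xp B ->
  lfd_victim tb C (behead B.1.1 ++ B.1.2 ++ t) = B.2.
Proof.
move=> vtb [uC sC mC] gB.
have [bE sub [us ss ms] xpsw /andP[xxp xpk]] := goodb_facts gB.
have xk : (B.2 < k.+1)%N by case/and5P: gB.
move: B gB bE sub us ss ms xpsw xxp xk => [[body sw] x] /= gB bE sub us ss ms xpsw xxp xk.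
set l := behead body ++ sw.
have xC : x \in C by rewrite mC xk xxp.
have xl : x \notin l.
  rewrite mem_cat negb_or; apply/andP; split; last by rewrite ms eqxx andbF.
  apply/negP => /mem_behead /sub; by rewrite ms eqxx andbF.
have cl : forall c, c \in C -> c != x -> c \in l.
  move=> c cC cx; rewrite mem_cat (ms c) cx; move: cC; rewrite mC => /andP[-> _].
  by rewrite orbT.
rewrite /lfd_victim catA -/l.
case xt: (x \in t).
- have -> : [seq y <- C | y \notin l ++ t] = [::].
    transitivity (filter pred0 C); last exact: filter_pred0.
    apply: eq_in_filter => c cC /=; rewrite mem_cat.
    case: (eqVneq c x) => [->|cx]; first by rewrite xt orbT.
    by rewrite cl.
  rewrite /=.
  have [vm vi] := far_foldr (l ++ t) C (head 0 C).
  set v := foldr _ _ _ in vm vi *.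
  have vC : v \in C.
    move: vm; rewrite inE => /orP[/eqP->|//].
    by case: (C) xC => //= c C' _; exact: mem_head.
  case: (eqVneq v x) => // vx; exfalso.
  have := vi x xC; rewrite (index_cat x l t) (index_cat v l t) (negbTE xl) (cl v vC vx).
  have := index_mem v l; rewrite (cl v vC vx); slia.
- have -> : [seq y <- C | y \notin l ++ t] = [:: x].
    transitivity (filter (pred1 x) C); last exact: filter_pred1_uniq.
    apply: eq_in_filter => c cC /=; rewrite mem_cat.
    case: (eqVneq c x) => [->|cx]; first by rewrite (negbTE xl) xt.
    by rewrite cl.
  rewrite /=.
  have : tb (sort leq [:: x]) \in sort leq [:: x].
    by apply: vtb; rewrite -size_eq0 size_sort.
  by rewrite mem_sort inE => /eqP.
Qed.

Lemma CI_step k C xp B : CI k C xp -> goodb k xp B -> CI k (xp :: rem B.2 C) B.2.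
Proof.
move=> [uC sC mC] gB; have [bE sub [us ss ms] xpsw /andP[xxp xpk]] := goodb_facts gB.
have xk : (B.2 < k.+1)%N by case/and5P: gB.
have xC : B.2 \in C by rewrite mC xk xxp.
have xpC : xp \notin C by rewrite mC eqxx andbF.
have k0 : (0 < k)%N by rewrite -sC; case: (C) xC.
split.
- rewrite /= rem_uniq // andbT; apply: contra xpC; exact: mem_rem.
- by rewrite /= size_rem // sC prednK.
- move=> y; rewrite inE (mem_rem_uniq _ uC) inE mC.
  case: (eqVneq y xp) => [->|yxp] /=; first by rewrite xpk eq_sym xxp.
  by rewrite andbT andbC.
Qed.

Lemma CI_mem_sw k C xp B : CI k C xp -> goodb k xp B ->
  forall y, (y \in xp :: rem B.2 C) = (y \in B.1.2).
Proof.
move=> IC gB y; have [_ _ m'] := CI_step IC gB.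
have [_ _ [_ _ ms] _ _] := goodb_facts gB.
by rewrite m' ms.
Qed.

Lemma lfd_block k tb C xp B t : valid_tb tb -> CI k C xp -> goodb k xp B ->
  lfd_caches k tb C (bseq B ++ t) =
  nseq (size (bseq B)) (xp :: rem B.2 C) ++ lfd_caches k tb (xp :: rem B.2 C) t.
Proof.
move=> vtb IC gB; have [bE sub [us ss ms] xpsw /andP[xxp xpk]] := goodb_facts gB.
have [uC sC mC] := IC.
have xpC : xp \notin C by rewrite mC eqxx andbF.
have vx : lfd_victim tb C ((behead B.1.1 ++ B.1.2) ++ t) = B.2.
  by rewrite -catA; exact: (@victim_x k tb C xp B t vtb IC gB).
rewrite /bseq bE /= (negbTE xpC) sC ltnn vx lfd_hits //.
apply/allP => y; rewrite (CI_mem_sw IC gB) mem_cat => /orP[/mem_behead|//].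
exact: sub.
Qed.

Lemma opt_hits k C l t : all (fun y => y \in C) l -> opt_cost k C (l ++ t) = opt_cost k C t.
Proof. by elim: l => //= r l IH /andP[rC al]; rewrite rC IH. Qed.

Lemma opt_fill k C l t : uniq (l ++ C) -> (size C + size l <= k)%N ->
  opt_cost k C (l ++ t) = (size l + opt_cost k (rev l ++ C) t)%N.
Proof.
elim: l C => [|r l IH] C //=.
rewrite mem_cat negb_or => /andP[/andP[rl rC] ulC] sk.
have sC : (size C < k)%N by move: sk => /= sk; slia.
rewrite (negbTE rC) sC.
have u' : uniq (l ++ r :: C).
  by rewrite -cat1s uniq_catCA /= mem_cat negb_or rl rC ulC.
have sk' : (size (r :: C) + size l <= k)%N by rewrite /= addSn -addnS.
by rewrite IH // rev_cons cat_rcons addSn.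
Qed.

Lemma opt_block k C xp B t : CI k C xp -> goodb k xp B ->
  (opt_cost k C (bseq B ++ t) <= 1 + opt_cost k (xp :: rem B.2 C) t)%N.
Proof.
move=> IC gB; have [bE sub [us ss ms] xpsw /andP[xxp xpk]] := goodb_facts gB.
have [uC sC mC] := IC.
have xk : (B.2 < k.+1)%N by case/and5P: gB.
have xC : B.2 \in C by rewrite mC xk xxp.
have xpC : xp \notin C by rewrite mC eqxx andbF.
rewrite /bseq bE /= (negbTE xpC) sC ltnn add1n ltnS.
apply: leq_trans (minn_foldr_le _ (map_f _ xC)) _.
rewrite opt_hits //.
apply/allP => y; rewrite (CI_mem_sw IC gB) mem_cat => /orP[/mem_behead|//].
exact: sub.
Qed.

Lemma nth_cat_r' (T : Type) (x0 : T) (s1 s2 : seq T) a i :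
  size s1 = a -> nth x0 (s1 ++ s2) (a + i) = nth x0 s2 i.
Proof. by move=> <-; exact: nth_cat_r. Qed.

Lemma ph_grow k (cur : seq nat) j (l t Q : seq nat) : uniq cur -> {subset cur <= Q} -> {subset l <= Q} ->
  uniq Q -> size Q <= k ->
  exists cur', [/\ phase_ids k cur j (l ++ t) = nseq (size l) j ++ phase_ids k cur' j t,
     uniq cur', {subset cur' <= Q}, {subset cur <= cur'} & {subset l <= cur'}].
Proof.
elim: l cur => [|r l IH] cur ucur cQ lQ uQ sQ /=.
  by exists cur; split => // y; rewrite in_nil.
have rQ : r \in Q by apply: lQ; exact: mem_head.
have lQ' : {subset l <= Q} by move=> y yl; apply: lQ; rewrite inE yl orbT.
case: ifPn => rc.
- have [c' [e u' s1 s2 s3]] := IH cur ucur cQ lQ' uQ sQ.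
  exists c'; split => //; first by rewrite e.
  by move=> y; rewrite inE => /orP[/eqP->|]; [exact: s2 | exact: s3].
- have rcQ : {subset r :: cur <= Q} by move=> y; rewrite inE => /orP[/eqP->//|/cQ].
  have urc : uniq (r :: cur) by rewrite /= rc ucur.
  have sc : size cur < k.
    have := uniq_leq_size urc rcQ; rewrite /=; slia.
  rewrite sc.
  have [c' [e u' s1 s2 s3]] := IH (r :: cur) urc rcQ lQ' uQ sQ.
  exists c'; split => //; first by rewrite e.
  + by move=> y yc; apply: s2; rewrite inE yc orbT.
  + move=> y; rewrite inE => /orP[/eqP->|]; last exact: s3.
    by apply: s2; exact: mem_head.
Qed.

Lemma CI_of k (c sw : seq nat) x : uniq c -> uniq sw -> size sw = k ->
  (forall y, (y \in sw) = (y < k.+1) && (y != x)) ->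
  {subset c <= sw} -> {subset sw <= c} -> CI k c x.
Proof.
move=> uc us ss ms s1 s2.
have e : c =i sw by move=> y; apply/idP/idP; [exact: s1 | exact: s2].
split => //; last by move=> y; rewrite e ms.
by rewrite -ss; apply: perm_size; apply: uniq_perm.
Qed.

Lemma ph_block k cur m xp B t : CI k cur xp -> goodb k xp B ->
  exists cur', phase_ids k cur m (bseq B ++ t) =
    nseq (size (bseq B)) m.+1 ++ phase_ids k cur' m.+1 t /\ CI k cur' B.2.
Proof.
move=> [uc sc mc] gB; have [bE sub [us ss ms] xpsw /andP[xxp xpk]] := goodb_facts gB.
have xpc : xp \notin cur by rewrite mc eqxx andbF.
rewrite /bseq bE /= (negbTE xpc) sc ltnn.
have lQ : {subset behead B.1.1 ++ B.1.2 <= B.1.2}.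
  by move=> y; rewrite mem_cat => /orP[/mem_behead/sub|].
have h1 : {subset [:: xp] <= B.1.2} by move=> y; rewrite inE => /eqP->.
have h2 : size B.1.2 <= k by rewrite ss.
have [c' [e u' s1 s2 s3]] := @ph_grow k [:: xp] m.+1 (behead B.1.1 ++ B.1.2) t B.1.2
  (erefl _) h1 lQ us h2.
exists c'; split; first by rewrite e.
apply: CI_of u' us ss ms s1 _ => y ysw; apply: s3; by rewrite mem_cat ysw orbT.
Qed.

Lemma ph_first k t : exists c0,
  phase_ids k [::] 0 (iota 0 k ++ t) = nseq k 0 ++ phase_ids k c0 0 t /\ CI k c0 k.
Proof.
have h1 : {subset [::] <= iota 0 k} by [].
have h2 : {subset iota 0 k <= iota 0 k} by [].
have h3 : size (iota 0 k) <= k by rewrite size_iota.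
have [c' [e u' s1 s2 s3]] := @ph_grow k [::] 0 (iota 0 k) t (iota 0 k)
  (erefl _) h1 h2 (iota_uniq _ _) h3.
exists c'; split; first by rewrite e size_iota.
apply: CI_of u' (iota_uniq 0 k) _ _ s1 s3; first by rewrite size_iota.
by move=> y; rewrite mem_iota /= add0n ltnS ltn_neqAle andbC.
Qed.

Lemma ph_ge k cur j rs : all (fun i => j <= i) (phase_ids k cur j rs).
Proof.
elim: rs cur j => //= r rs IH cur j.
case: ifP => _; first by rewrite /= leqnn /=; exact: IH.
case: ifP => _; first by rewrite /= leqnn /=; exact: IH.
rewrite /= leqnSn /=; apply: sub_all (IH _ _) => i; exact: ltnW.
Qed.

Lemma size_ph k cur j rs : size (phase_ids k cur j rs) = size rs.
Proof.
elim: rs cur j => //= r rs IH cur j.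
by case: ifP => _; [|case: ifP => _] => /=; rewrite IH.
Qed.

Definition cntd (ph rs : seq nat) (i : nat) : bool :=
  has (fun i' => nth 0 ph i' == (nth 0 ph i).+1) (iota 0 (size rs)) &&
  ~~ has (fun i' => (nth 0 ph i' == nth 0 ph i) && (nth 0 rs i' == nth 0 rs i))
         (iota i.+1 (size rs - i.+1)).

Definition pph (ph rs : seq nat) (i : nat) : bool :=
  ~~ has (fun i' => (nth 0 ph i' == (nth 0 ph i).+1) && (nth 0 rs i' == nth 0 rs i))
         (iota 0 (size rs)).

Definition etaP (ps : seq bool) (ph rs : seq nat) (hb : bool) : nat :=
  count (fun i => [&& cntd ph rs i, nth false ps i == hb & pph ph rs i == ~~ hb])
    (iota 0 (size rs)).

Lemma eta_phaseE k s hb :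
  eta_phase k s hb = etaP (unzip2 s) (phase_ids k [::] 0 (unzip1 s)) (unzip1 s) hb.
Proof. by rewrite /eta_phase /etaP size_map. Qed.

Lemma eta_discardE k tb s hb :
  eta_discard k tb s hb = etaD (unzip2 s) (unzip1 s) (lfd_caches k tb [::] (unzip1 s)) hb.
Proof. by rewrite /eta_discard /etaD size_map. Qed.

Lemma has_prefix_false (P : pred nat) a :
  (forall i, i < a -> P i = false) -> has P (iota 0 a) = false.
Proof. by move=> H; apply/hasPn => i; rewrite mem_iota /= add0n => /H ->. Qed.

Lemma cntd_shift pre rs m phR i : all (fun j => m < j) phR -> size phR = size rs ->
  i < size rs ->
  cntd (nseq (size pre) m ++ phR) (pre ++ rs) (size pre + i) = cntd phR rs i.
Proof.
move=> aph sph ir.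
have sn : size (nseq (size pre) m) = size pre by rewrite size_nseq.
have mJ : m < nth 0 phR i by apply: (allP aph); apply: mem_nth; rewrite sph.
have mJ' : (m == (nth 0 phR i).+1) = false by apply: ltn_eqF; rewrite ltnS; exact: ltnW.
rewrite /cntd (nth_cat_r' _ _ _ sn) nth_cat_r size_cat has_iota_add.
rewrite has_prefix_false /=; last first.
  by move=> i' lt; rewrite nth_cat sn lt nth_nseq lt mJ'.
congr (_ && ~~ _).
  by apply: eq_has => i' /=; rewrite (nth_cat_r' _ _ _ sn).
rewrite -addnS subnDl iotaDl has_map; apply: eq_has => i' /=.
by rewrite (nth_cat_r' _ _ _ sn) nth_cat_r.
Qed.

Lemma pph_shift pre rs m phR i : all (fun j => m < j) phR -> size phR = size rs ->
  i < size rs ->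
  pph (nseq (size pre) m ++ phR) (pre ++ rs) (size pre + i) = pph phR rs i.
Proof.
move=> aph sph ir.
have sn : size (nseq (size pre) m) = size pre by rewrite size_nseq.
have mJ : m < nth 0 phR i by apply: (allP aph); apply: mem_nth; rewrite sph.
have mJ' : (m == (nth 0 phR i).+1) = false by apply: ltn_eqF; rewrite ltnS; exact: ltnW.
rewrite /pph (nth_cat_r' _ _ _ sn) nth_cat_r size_cat has_iota_add.
rewrite has_prefix_false /=; last first.
  by move=> i' lt; rewrite nth_cat sn lt nth_nseq lt mJ'.
by congr (~~ _); apply: eq_has => i' /=; rewrite (nth_cat_r' _ _ _ sn) nth_cat_r.
Qed.

Lemma etaP_cat psB rsB ps phR rs j hb :
  size psB = size rsB -> size phR = size rs -> all (fun i => j < i) phR ->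
  etaP (psB ++ ps) (nseq (size rsB) j ++ phR) (rsB ++ rs) hb =
  count (fun i => [&& cntd (nseq (size rsB) j ++ phR) (rsB ++ rs) i,
                      nth false psB i == hb &
                      pph (nseq (size rsB) j ++ phR) (rsB ++ rs) i == ~~ hb])
    (iota 0 (size rsB)) + etaP ps phR rs hb.
Proof.
move=> sp sph aph; rewrite /etaP size_cat count_iota_add; congr (_ + _).
  apply: eq_in_count => i; rewrite mem_iota /= add0n => lt.
  by rewrite nth_cat_l // sp.
apply: eq_in_count => i; rewrite mem_iota /= add0n => lt.
by rewrite cntd_shift // pph_shift // -{1}sp nth_cat_r.
Qed.

Lemma count0_in (T : eqType) (P : pred T) s :
  (forall x, x \in s -> P x = false) -> count P s = 0.
Proof. by move=> H; apply/eqP; rewrite -leqn0 leqNgt -has_count; apply/hasPn => x /H ->. Qed.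

Lemma drop_cat_le (T : Type) n (s1 s2 : seq T) : n <= size s1 ->
  drop n (s1 ++ s2) = drop n s1 ++ s2.
Proof.
move=> h; rewrite drop_cat; case: ltnP => h' //.
have -> : n = size s1 by apply/eqP; rewrite eqn_leq h h'.
by rewrite subnn drop0 drop_size.
Qed.

Definition C1 (B : seq nat) (cB : seq (seq nat)) :=
  forall o j, o <= j < size B -> nth 0 B o \in nth [::] cB j.

Lemma pst_body (body sw rs : seq nat) (cB cs : seq (seq nat)) o : {subset body <= sw} ->
  size cB = size (body ++ sw) -> C1 (body ++ sw) cB -> o < size body ->
  pst ((body ++ sw) ++ rs) (cB ++ cs) o = false.
Proof.
move=> sub sc c1 ob.
have ysw : nth 0 body o \in sw by apply: sub; exact: mem_nth.
have sw0 : 0 < size sw by case: (sw) ysw.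
have oB1 : o.+1 < size (body ++ sw) by rewrite size_cat; slia.
have oB : o < size (body ++ sw) by apply: ltnW.
have yB : nth 0 ((body ++ sw) ++ rs) o = nth 0 (body ++ sw) o by rewrite nth_cat_l.
have yb : nth 0 (body ++ sw) o = nth 0 body o by rewrite nth_cat_l.
have yd : nth 0 body o \in drop o.+1 (body ++ sw).
  rewrite drop_cat; case: ifP => h; first by rewrite mem_cat ysw orbT.
  have -> : o.+1 - size body = 0 by slia.
  by rewrite drop0.
have idx : index (nth 0 body o) (drop o.+1 ((body ++ sw) ++ rs)) < size (body ++ sw) - o.+1.
  by rewrite drop_cat oB1 index_cat yd -size_drop index_mem.
rewrite /pst /= yB yb; apply/hasPn => j; rewrite mem_index_iota => /andP[oj jlt].
have jB : j < size cB.
  rewrite sc; apply: ltn_trans jlt _.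
  by rewrite -[X in _ < X](subnKC (ltnW oB1)) ltn_add2l.
rewrite nth_cat_l // negbK -yb; apply: c1; rewrite -sc jB andbT; exact: ltnW.
Qed.

Lemma pst_sweep (body sw rs : seq nat) (cB cs : seq (seq nat)) q : uniq sw ->
  size cB = size (body ++ sw) -> C1 (body ++ sw) cB -> q < size sw ->
  pst ((body ++ sw) ++ rs) (cB ++ cs) (size body + q) =
  has (fun j => nth 0 sw q \notin nth [::] cs j) (iota 0 (index (nth 0 sw q) rs)).
Proof.
move=> us sc c1 qs.
set y := nth 0 sw q.
have yB : nth 0 ((body ++ sw) ++ rs) (size body + q) = y by rewrite -catA nth_cat_r nth_cat_l.
have dr : drop (size body + q).+1 ((body ++ sw) ++ rs) = drop q.+1 sw ++ rs.
  by rewrite -catA -addnS drop_cat ltnNge leq_addr /= addKn drop_cat_le.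
have ynd : y \notin drop q.+1 sw.
  by have := drop_uniq q us; rewrite (drop_nth 0 qs) /= => /andP[].
have idx : index y (drop q.+1 sw ++ rs) = size (drop q.+1 sw) + index y rs.
  by rewrite index_cat (negbTE ynd).
rewrite /pst /= yB dr idx size_drop.
have -> : (size body + q).+1 + (size sw - q.+1 + index y rs) =
          size (body ++ sw) + index y rs by rewrite size_cat; slia.
rewrite (@index_iota_cat _ (size (body ++ sw)) _); last by rewrite size_cat; slia.
rewrite has_cat.
have -> : has (fun j => y \notin nth [::] (cB ++ cs) j)
            (index_iota (size body + q).+1 (size (body ++ sw))) = false.
  apply/hasPn => j; rewrite mem_index_iota => /andP[oj jlt].
  have jB : j < size cB by rewrite sc.
  have := c1 (size body + q) j; rewrite nth_cat_r => H.
  by rewrite nth_cat_l // negbK H // jlt andbT ltnW.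
rewrite /= /index_iota addKn iota_shift has_map; apply: eq_has => j /=.
by rewrite -sc nth_cat_r.
Qed.

Lemma localD (body sw rs : seq nat) (cB cs : seq (seq nat)) b hb : {subset body <= sw} -> uniq sw ->
  size cB = size (body ++ sw) -> C1 (body ++ sw) cB ->
  count (fun i => (nth false (nseq (size body) false ++ nseq (size sw) b) i == hb) &&
                  (pst ((body ++ sw) ++ rs) (cB ++ cs) i == ~~ hb))
        (iota 0 (size (body ++ sw)))
  = count (fun y => (b == hb) &&
       (has (fun j => y \notin nth [::] cs j) (iota 0 (index y rs)) == ~~ hb)) sw.
Proof.
move=> sub us sc c1.
rewrite size_cat count_iota_add.
rewrite [count _ (iota 0 (size body))]count0_in ?add0n; last first.
  move=> o; rewrite mem_iota /= add0n => ob.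
  rewrite nth_cat_l ?size_nseq // nth_nseq ob pst_body //; by case: hb.
rewrite -(@count_nth _ 0 _ sw).
apply: eq_in_count => q; rewrite mem_iota /= add0n => qs.
by rewrite (nth_cat_r' _ _ _ (size_nseq _ _)) nth_nseq qs pst_sweep.
Qed.

Lemma has_next y (B' rs' C' : seq nat) (cs' : seq (seq nat)) (sw' : seq nat) : (forall z, (z \in C') = (z \in sw')) ->
  {subset sw' <= B'} -> head 0 B' != y -> B' != [::] ->
  has (fun j => y \notin nth [::] (nseq (size B') C' ++ cs') j)
      (iota 0 (index y (B' ++ rs'))) = (y \notin sw').
Proof.
move=> mC sub hy bn.
have sB : 0 < size B' by case: (B') bn.
case: (boolP (y \in sw')) => ysw /=.
- apply/hasPn => j; rewrite mem_iota /= add0n => jl.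
  have yB : y \in B' by apply: sub.
  move: jl; rewrite index_cat yB => jl.
  have jB : j < size B' by apply: ltn_trans jl _; rewrite index_mem.
  by rewrite nth_cat_l ?size_nseq // nth_nseq jB mC ysw.
- apply/hasP; exists 0.
    rewrite mem_iota /= add0n; case: (B') hy bn => // c B'' hy _ /=.
    by rewrite (negbTE hy).
  by rewrite nth_cat_l ?size_nseq // nth_nseq sB mC.
Qed.

Definition nl (k : nat) (hb b : bool) : nat :=
  if hb then (if b then k.-1 else 0) else (if b then 0 else 1).
Definition la (k : nat) (hb b : bool) : nat := if hb && b then k else 0.

Lemma cnt_next k (sw sw' : seq nat) x x' b hb : uniq sw -> size sw = k ->
  (forall y, (y \in sw) = (y < k.+1) && (y != x)) ->
  (forall y, (y \in sw') = (y < k.+1) && (y != x')) ->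
  x \in sw' -> x' < k.+1 ->
  count (fun y => (b == hb) && ((y \notin sw') == ~~ hb)) sw <= nl k hb b.
Proof.
move=> us ss ms ms' xsw xk.
have E : {in sw, forall y, (y \notin sw') = (y == x')}.
  move=> y; rewrite ms => /andP[yk _]; rewrite ms' yk /=; by case: (y == x').
have x'x : x' != x by apply/eqP => e; move: xsw; rewrite ms' -e eqxx andbF.
have x'sw : x' \in sw by rewrite ms xk x'x.
have c1 : count (pred1 x') sw = 1 by rewrite count_uniq_mem // x'sw.
case: hb; case: b => /=.
- rewrite (@eq_in_count _ _ (predC (pred1 x'))); last first.
    by move=> y ysw /=; rewrite E.
  have := count_predC (pred1 x') sw; rewrite c1 ss; slia.
- by rewrite count0_in.
- by rewrite count0_in.
- rewrite (@eq_in_count _ _ (pred1 x')) ?c1 // => y ysw /=.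
  by rewrite E; case: (y == x').
Qed.

Lemma cnt_last k (sw : seq nat) b hb : size sw = k ->
  count (fun y => (b == hb) && (false == ~~ hb)) sw <= la k hb b.
Proof.
move=> ss; case: hb; case: b => /=.
- by rewrite count_predT ss.
- by rewrite count0_in.
- by rewrite count0_in.
- by rewrite count0_in.
Qed.

Lemma etaD_rest k tb b hb : valid_tb tb -> forall Bs xp C, CI k C xp -> goodBs k xp Bs ->
  etaD (flatten (map (bpred b) Bs)) (flatten (map bseq Bs))
       (lfd_caches k tb C (flatten (map bseq Bs))) hb <= size Bs * nl k hb b + la k hb b.
Proof.
move=> vtb; elim=> [|B Bs IH] xp C IC /=; first by rewrite /etaD.
case/andP => gB gBs.
have [bE sub [us ss ms] xpsw /andP[xxp xpk]] := goodb_facts gB.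
have IC1 := CI_step IC gB.
rewrite (lfd_block _ vtb IC gB) etaD_cat ?size_bpred ?size_nseq //.
have c1 : C1 (bseq B) (nseq (size (bseq B)) (xp :: rem B.2 C)).
  move=> o j /andP[oj jl]; rewrite nth_nseq jl (CI_mem_sw IC gB).
  rewrite /bseq nth_cat; case: ltnP => h; first by apply: sub; exact: mem_nth.
  apply: mem_nth; move: jl; rewrite /bseq size_cat; slia.
set L := count _ _.
have HL : L <= (if Bs is [::] then la k hb b else nl k hb b).
  rewrite /L localD ?size_nseq //.
  case: Bs gBs {IH L} => [|B' Bs'] gBs.
    by rewrite /=; exact: cnt_last.
  move: gBs => /= /andP[gB' _].
  have [bE' sub' [us' ss' ms'] xpsw' /andP[xxp' xpk']] := goodb_facts gB'.
  rewrite (lfd_block _ vtb IC1 gB').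
  rewrite (@eq_in_count _ _ (fun y => (b == hb) && ((y \notin B'.1.2) == ~~ hb))).
    apply: cnt_next us ss ms ms' xpsw' _; by case/and5P: gB'.
  move=> y ysw /=; rewrite (@has_next _ _ _ _ _ B'.1.2) //.
  - exact: (CI_mem_sw IC1 gB').
  - by move=> z zs; rewrite /bseq mem_cat zs orbT.
  - rewrite /bseq bE' /=; apply/eqP => e; move: ysw; rewrite ms -e eqxx andbF.
    by [].
  - by rewrite /bseq bE'.
clearbody L; case: Bs IH gBs HL => [|B' Bs'] IH gBs HL.
  by rewrite /etaD /= addn0 mul1n; apply: leq_trans HL (leq_addl _ _).
apply: leq_trans (leq_add HL (IH _ _ IC1 gBs)) _.
by rewrite /= mulSn addnA.
Qed.

Definition B0 k : blk := ([::], iota 0 k, k).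

Lemma unzip1_flat b L : unzip1 (flatten (map (pairs b) L)) = flatten (map bseq L).
Proof.
by rewrite /unzip1 map_flatten -map_comp; congr flatten; apply: eq_map => B; exact: unzip1_pairs.
Qed.

Lemma unzip2_flat b L : unzip2 (flatten (map (pairs b) L)) = flatten (map (bpred b) L).
Proof.
by rewrite /unzip2 map_flatten -map_comp; congr flatten; apply: eq_map => B; exact: unzip2_pairs.
Qed.

Lemma unzip1_full b k Bs :
  unzip1 (flatten (map (pairs b) (B0 k :: Bs))) = iota 0 k ++ flatten (map bseq Bs).
Proof. by rewrite unzip1_flat. Qed.

Lemma unzip2_full b k Bs :
  unzip2 (flatten (map (pairs b) (B0 k :: Bs))) = nseq k b ++ flatten (map (bpred b) Bs).
Proof. by rewrite unzip2_flat /= /bpred /= size_iota. Qed.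

Lemma CI0 k : CI k (rev (iota 0 k) ++ [::]) k.
Proof.
rewrite cats0; split; first by rewrite rev_uniq iota_uniq.
  by rewrite size_rev size_iota.
by move=> y; rewrite mem_rev mem_iota /= add0n ltnS ltn_neqAle andbC.
Qed.

Lemma etaD_full k tb b hb Bs : valid_tb tb -> goodBs k k Bs ->
  eta_discard k tb (flatten (map (pairs b) (B0 k :: Bs))) hb <=
  (size Bs).+1 * nl k hb b + la k hb b.
Proof.
move=> vtb gBs; rewrite eta_discardE unzip1_full unzip2_full.
have u0 : uniq (iota 0 k ++ [::]) by rewrite cats0 iota_uniq.
have s0 : size (@nil nat) + size (iota 0 k) <= k by rewrite size_iota.
have [cp [s1 s2 s3 e]] := @lfd_fill k tb [::] (iota 0 k) (flatten (map bseq Bs)) u0 s0.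
rewrite e etaD_cat ?size_nseq ?size_iota //.
set L := count _ _.
have IC0 := CI0 k.
have HL : L <= (if Bs is [::] then la k hb b else nl k hb b).
  have h1 : {subset [::] <= iota 0 k} by [].
  have h3 : size cp = size ([::] ++ iota 0 k) by rewrite s1.
  have := @localD [::] (iota 0 k) (flatten (map bseq Bs)) cp (lfd_caches k tb (rev (iota 0 k) ++ [::]) (flatten (map bseq Bs)))
    b hb h1 (iota_uniq 0 k) h3 s3.
  rewrite /L /= size_iota => ->.
  have ms0 : forall y, (y \in iota 0 k) = (y < k.+1) && (y != k).
    by move=> y; rewrite mem_iota /= add0n ltnS ltn_neqAle andbC.
  clear e; case: Bs gBs {L} => [|B' Bs'] gBs.
    by rewrite /=; apply: cnt_last; rewrite size_iota.
  move: gBs => /= /andP[gB' _].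
  have [bE' sub' [us' ss' ms'] xpsw' /andP[xxp' xpk']] := goodb_facts gB'.
  rewrite (lfd_block _ vtb IC0 gB').
  rewrite (@eq_in_count _ _ (fun y => (b == hb) && ((y \notin B'.1.2) == ~~ hb))).
    apply: cnt_next (iota_uniq 0 k) (size_iota 0 k) ms0 ms' xpsw' _; by case/and5P: gB'.
  move=> y ysw /=; rewrite (@has_next _ _ _ _ _ B'.1.2) //.
  - exact: (CI_mem_sw IC0 gB').
  - by move=> z zs; rewrite /bseq mem_cat zs orbT.
  - rewrite /bseq bE' /=; apply/eqP => e'; move: ysw; rewrite ms0 -e' eqxx andbF.
    by [].
  - by rewrite /bseq bE'.
clearbody L; clear e; move: HL; case: Bs gBs => [|B' Bs'] gBs HL.
  by rewrite /etaD /= addn0 mul1n; apply: leq_trans HL (leq_addl _ _).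
apply: leq_trans (leq_add HL (etaD_rest b hb vtb IC0 gBs)) _.
  by rewrite /= !mulSn !addnA.
by rewrite s1 size_iota.
Qed.

Lemma cntd_body (body sw : seq nat) m (phR rs : seq nat) o : {subset body <= sw} ->
  o < size body ->
  cntd (nseq (size (body ++ sw)) m ++ phR) ((body ++ sw) ++ rs) o = false.
Proof.
move=> sub ob.
have oB : o < size (body ++ sw) by rewrite size_cat ltn_addr.
have e1 : nth 0 (nseq (size (body ++ sw)) m ++ phR) o = m.
  by rewrite nth_cat_l ?size_nseq // nth_nseq oB.
have e2 : nth 0 ((body ++ sw) ++ rs) o = nth 0 body o by rewrite nth_cat_l // nth_cat ob.
have ysw : nth 0 body o \in sw by apply: sub; exact: mem_nth.
set y := nth 0 body o in e2 ysw.
have pB : size body + index y sw < size (body ++ sw) by rewrite size_cat ltn_add2l index_mem.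
rewrite /cntd e1 e2; apply/andP => [[_]]; apply/negP; rewrite negbK; apply/hasP.
exists (size body + index y sw).
  rewrite mem_iota size_cat; move: pB; rewrite size_cat; slia.
rewrite nth_cat_l ?size_nseq // nth_nseq pB eqxx /=.
by rewrite nth_cat_l // nth_cat_r nth_index.
Qed.

Lemma cntd_sweep (body sw : seq nat) m (phR rs : seq nat) q : uniq sw -> q < size sw ->
  all (fun j => m < j) phR -> size phR = size rs ->
  cntd (nseq (size (body ++ sw)) m ++ phR) ((body ++ sw) ++ rs) (size body + q) =
  has (fun i => nth 0 phR i == m.+1) (iota 0 (size rs)).
Proof.
move=> us qs aph sph.
have sB : size (nseq (size (body ++ sw)) m) = size (body ++ sw) by rewrite size_nseq.
have oB : size body + q < size (body ++ sw) by rewrite size_cat ltn_add2l.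
have e1 : nth 0 (nseq (size (body ++ sw)) m ++ phR) (size body + q) = m.
  by rewrite nth_cat_l ?size_nseq // nth_nseq oB.
have e2 : nth 0 ((body ++ sw) ++ rs) (size body + q) = nth 0 sw q.
  by rewrite nth_cat_l // nth_cat_r.
rewrite /cntd e1 e2 [size ((body ++ sw) ++ rs)]size_cat has_iota_add.
rewrite has_prefix_false /=; last first.
  move=> i lt; rewrite nth_cat_l ?size_nseq // nth_nseq lt.
  by apply: negbTE; rewrite neq_ltn ltnSn.
have -> : has (fun i => nth 0 (nseq (size (body ++ sw)) m ++ phR) (size (body ++ sw) + i) == m.+1)
            (iota 0 (size rs)) = has (fun i => nth 0 phR i == m.+1) (iota 0 (size rs)).
  by apply: eq_has => i /=; rewrite (nth_cat_r' _ _ _ sB).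
apply/andP/idP => [[]//|H]; split => //.
apply/hasPn => i; rewrite mem_iota => /andP[lo hi].
case: (ltnP i (size (body ++ sw))) => iB.
- have [q' iq] : exists q', i = size body + q'.
    by exists (i - size body); rewrite subnKC //; move: lo; slia.
  subst i.
  have q's : q' < size sw by move: iB; rewrite size_cat ltn_add2l.
  rewrite nth_cat_l ?size_nseq // nth_nseq iB eqxx /= nth_cat_l // nth_cat_r.
  rewrite (nth_uniq _ q's qs us); apply/negP => /eqP e; move: lo; rewrite e; slia.
- have [i' iq] : exists i', i = size (body ++ sw) + i' by exists (i - size (body ++ sw)); rewrite subnKC.
  subst i.
  rewrite (nth_cat_r' _ _ _ sB).
  have : i' < size rs by move: hi; rewrite size_cat; slia.
  rewrite -sph => i'l; have := allP aph _ (mem_nth 0 i'l).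
  by case: (nth 0 phR i' =P m) => // ->; rewrite ltnn.
Qed.

Lemma pph_local (B : seq nat) m (phR rs : seq nat) o : o < size B -> size phR = size rs ->
  pph (nseq (size B) m ++ phR) (B ++ rs) o =
  ~~ has (fun i => (nth 0 phR i == m.+1) && (nth 0 rs i == nth 0 B o)) (iota 0 (size rs)).
Proof.
move=> oB sph.
have sB : size (nseq (size B) m) = size B by rewrite size_nseq.
have e1 : nth 0 (nseq (size B) m ++ phR) o = m by rewrite nth_cat_l ?size_nseq // nth_nseq oB.
have e2 : nth 0 (B ++ rs) o = nth 0 B o by rewrite nth_cat_l.
rewrite /pph e1 e2 size_cat has_iota_add has_prefix_false /=; last first.
  move=> i lt; rewrite nth_cat_l ?size_nseq // nth_nseq lt.
  by have -> : (m == m.+1) = false by apply: negbTE; rewrite neq_ltn ltnSn.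
by congr (~~ _); apply: eq_has => i /=; rewrite (nth_cat_r' _ _ _ sB) nth_cat_r.
Qed.

Lemma localP (body sw : seq nat) m (phR rs : seq nat) b hb : {subset body <= sw} -> uniq sw ->
  all (fun j => m < j) phR -> size phR = size rs ->
  count (fun i => [&& cntd (nseq (size (body ++ sw)) m ++ phR) ((body ++ sw) ++ rs) i,
                      nth false (nseq (size body) false ++ nseq (size sw) b) i == hb &
                      pph (nseq (size (body ++ sw)) m ++ phR) ((body ++ sw) ++ rs) i == ~~ hb])
    (iota 0 (size (body ++ sw))) =
  count (fun y => [&& has (fun i => nth 0 phR i == m.+1) (iota 0 (size rs)), b == hb &
     (~~ has (fun i => (nth 0 phR i == m.+1) && (nth 0 rs i == y)) (iota 0 (size rs)))
       == ~~ hb]) sw.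
Proof.
move=> sub us aph sph.
rewrite [X in count _ (iota 0 X)]size_cat count_iota_add.
rewrite [count _ (iota 0 (size body))]count0_in ?add0n; last first.
  move=> o; rewrite mem_iota /= add0n => ob.
  by rewrite cntd_body.
rewrite -(@count_nth _ 0 _ sw).
apply: eq_in_count => q; rewrite mem_iota /= add0n => qs.
have oB : size body + q < size (body ++ sw) by rewrite size_cat ltn_add2l.
rewrite cntd_sweep // (nth_cat_r' _ _ _ (size_nseq _ _)) nth_nseq qs pph_local //.
by rewrite nth_cat_r.
Qed.

Lemma NX_next (B' : seq nat) m (phR' rs' : seq nat) : B' != [::] ->
  has (fun i => nth 0 (nseq (size B') m.+1 ++ phR') i == m.+1) (iota 0 (size (B' ++ rs'))).
Proof.
move=> bn; have sB : 0 < size B' by case: (B') bn.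
apply/hasP; exists 0; first by rewrite mem_iota size_cat; slia.
by rewrite nth_cat_l ?size_nseq // nth_nseq sB.
Qed.

Lemma P_next (B' : seq nat) m (phR' rs' : seq nat) y :
  all (fun j => m.+1 < j) phR' -> size phR' = size rs' ->
  has (fun i => (nth 0 (nseq (size B') m.+1 ++ phR') i == m.+1) && (nth 0 (B' ++ rs') i == y))
      (iota 0 (size (B' ++ rs'))) = (y \in B').
Proof.
move=> aph sph.
have sB : size (nseq (size B') m.+1) = size B' by rewrite size_nseq.
rewrite size_cat has_iota_add.
have -> : has (fun i => (nth 0 (nseq (size B') m.+1 ++ phR') (size B' + i) == m.+1) &&
     (nth 0 (B' ++ rs') (size B' + i) == y)) (iota 0 (size rs')) = false.
  apply/hasPn => i; rewrite mem_iota /= add0n => il.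
  rewrite (nth_cat_r' _ _ _ sB); rewrite -sph in il; have := allP aph _ (mem_nth 0 il).
  by case: (nth 0 phR' i =P m.+1) => // ->; rewrite ltnn.
rewrite orbF -has_pred1 -(@has_nth _ 0 _ B'); apply: eq_in_has => i.
rewrite mem_iota /= add0n => il.
by rewrite nth_cat_l ?size_nseq // nth_nseq il eqxx nth_cat_l.
Qed.

Lemma ph_tail_gt k cur m xp Bs : CI k cur xp -> goodBs k xp Bs ->
  all (fun i => m < i) (phase_ids k cur m (flatten (map bseq Bs))).
Proof.
move=> IC; case: Bs => [|B Bs] //= /andP[gB _].
have [c' [e _]] := @ph_block k cur m xp B (flatten (map bseq Bs)) IC gB.
rewrite e all_cat; apply/andP; split; last exact: ph_ge.
by apply/allP => i; rewrite mem_nseq => /andP[_ /eqP->].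
Qed.

Lemma cnt_nextP k (sw : seq nat) x (B' : blk) b hb : uniq sw -> size sw = k ->
  (forall y, (y \in sw) = (y < k.+1) && (y != x)) -> goodb k x B' ->
  count (fun y => [&& true, b == hb & (~~ (y \in bseq B')) == ~~ hb]) sw <= nl k hb b.
Proof.
move=> us ss ms gB'.
have [bE' sub' [us' ss' ms'] xpsw' /andP[xxp' xpk']] := goodb_facts gB'.
rewrite (@eq_in_count _ _ (fun y => (b == hb) && ((y \notin B'.1.2) == ~~ hb))).
  apply: cnt_next us ss ms ms' xpsw' _; by case/and5P: gB'.
move=> y ysw /=; congr (_ && (~~ _ == _)).
rewrite /bseq mem_cat; apply/idP/idP => [/orP[/sub'|]//|->]; by rewrite orbT.
Qed.

Lemma etaP_rest k b hb : forall Bs xp cur m, CI k cur xp -> goodBs k xp Bs ->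
  etaP (flatten (map (bpred b) Bs)) (phase_ids k cur m (flatten (map bseq Bs)))
       (flatten (map bseq Bs)) hb <= size Bs * nl k hb b + la k hb b.
Proof.
elim=> [|B Bs IH] xp cur m IC /=; first by rewrite /etaP.
case/andP => gB gBs.
have [bE sub [us ss ms] xpsw /andP[xxp xpk]] := goodb_facts gB.
have [cur' [e IC']] := @ph_block k cur m xp B (flatten (map bseq Bs)) IC gB.
have aph := @ph_tail_gt k cur' m.+1 B.2 Bs IC' gBs.
rewrite e etaP_cat ?size_bpred ?size_ph //.
set L := count _ _.
have HL : L <= (if Bs is [::] then la k hb b else nl k hb b).
  rewrite /L /bseq /bpred localP ?size_ph //.
  clear e; case: Bs gBs aph {IH L} => [|B' Bs'] gBs aph.
    by rewrite /= count0_in.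
  have /andP[gB' gBs'] := gBs.
  have [cur'' [e' IC'']] := @ph_block k cur' m.+1 B.2 B' (flatten (map bseq Bs')) IC' gB'.
  have aph' := @ph_tail_gt k cur'' m.+2 B'.2 Bs' IC'' gBs'.
  have bn : bseq B' != [::].
    by rewrite /bseq; have [-> _ _ _ _] := goodb_facts gB'.
  rewrite /= e' NX_next //.
  rewrite (@eq_in_count _ _ (fun y => [&& true, b == hb & (~~ (y \in bseq B')) == ~~ hb])).
    exact: cnt_nextP us ss ms gB'.
  by move=> y ysw /=; rewrite P_next ?size_ph.
clearbody L; clear e; case: Bs IH gBs aph HL => [|B' Bs'] IH gBs aph HL.
  by rewrite /etaP /= addn0 mul1n; apply: leq_trans HL (leq_addl _ _).
apply: leq_trans (leq_add HL (IH _ _ _ IC' gBs)) _.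
by rewrite /= !mulSn !addnA.
Qed.

Lemma etaP_full k b hb Bs : goodBs k k Bs ->
  eta_phase k (flatten (map (pairs b) (B0 k :: Bs))) hb <=
  (size Bs).+1 * nl k hb b + la k hb b.
Proof.
move=> gBs; rewrite eta_phaseE unzip1_full unzip2_full.
have [c0 [e IC0]] := ph_first k (flatten (map bseq Bs)).
rewrite e.
have aph := @ph_tail_gt k c0 0 k Bs IC0 gBs.
have -> : nseq k 0 = nseq (size (iota 0 k)) 0 by rewrite size_iota.
rewrite etaP_cat ?size_nseq ?size_iota ?size_ph //.
set L := count _ _.
have HL : L <= (if Bs is [::] then la k hb b else nl k hb b).
  have h1 : {subset [::] <= iota 0 k} by [].
  have := @localP [::] (iota 0 k) 0 (phase_ids k c0 0 (flatten (map bseq Bs)))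
    (flatten (map bseq Bs)) b hb h1 (iota_uniq 0 k) aph (size_ph _ _ _ _).
  rewrite /L /= !size_iota => ->.
  have ms0 : forall y, (y \in iota 0 k) = (y < k.+1) && (y != k).
    by move=> y; rewrite mem_iota /= add0n ltnS ltn_neqAle andbC.
  clear e; case: Bs gBs aph {L} => [|B' Bs'] gBs aph.
    by rewrite /= count0_in.
  have /andP[gB' gBs'] := gBs.
  have [cur'' [e' IC'']] := @ph_block k c0 0 k B' (flatten (map bseq Bs')) IC0 gB'.
  have aph' := @ph_tail_gt k cur'' 1 B'.2 Bs' IC'' gBs'.
  have bn : bseq B' != [::].
    by rewrite /bseq; have [-> _ _ _ _] := goodb_facts gB'.
  rewrite /= e' NX_next //.
  rewrite (@eq_in_count _ _ (fun y => [&& true, b == hb & (~~ (y \in bseq B')) == ~~ hb])).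
    exact: cnt_nextP (iota_uniq 0 k) (size_iota 0 k) ms0 gB'.
  by move=> y ysw /=; rewrite P_next ?size_ph.
clearbody L; clear e; case: Bs gBs aph HL => [|B' Bs'] gBs aph HL.
  by rewrite /etaP /= addn0 mul1n; apply: leq_trans HL (leq_addl _ _).
apply: leq_trans (leq_add HL (@etaP_rest k b hb _ _ _ 0 IC0 gBs)) _.
by rewrite /= !mulSn !addnA.
Qed.

Lemma opt_rest k : forall Bs xp C, CI k C xp -> goodBs k xp Bs ->
  opt_cost k C (flatten (map bseq Bs)) <= size Bs.
Proof.
elim=> [|B Bs IH] xp C IC //= /andP[gB gBs].
apply: leq_trans (opt_block _ IC gB) _.
by rewrite add1n ltnS; apply: IH gBs; exact: CI_step.
Qed.

Lemma opt_full k b Bs : goodBs k k Bs ->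
  opt_cost k [::] (unzip1 (flatten (map (pairs b) (B0 k :: Bs)))) <= k + size Bs.
Proof.
move=> gBs; rewrite unzip1_full.
have u0 : uniq (iota 0 k ++ [::]) by rewrite cats0 iota_uniq.
have s0 : size (@nil nat) + size (iota 0 k) <= k by rewrite size_iota.
rewrite opt_fill // size_iota leq_add2l.
exact: opt_rest (CI0 k) gBs.
Qed.

Local Open Scope ring_scope.

Fixpoint fillh (h : hist) (C : seq nat) (b : bool) (l : seq nat) : hist :=
  match l with
  | [::] => h
  | r :: l' => fillh (rcons h (r, b, r :: C)) (r :: C) b l'
  end.

Lemma exp_fill (R : realType) k (A : alg R) h (C : seq nat) b (l : seq nat) t :
  uniq (l ++ C) -> (size C + size l <= k)%N ->
  exp_cost k A h C ([seq (y, b) | y <- l] ++ t) =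
  (size l)%:R + exp_cost k A (fillh h C b l) (rev l ++ C) t.
Proof.
elim: l h C => [|r l IH] h C /=; first by rewrite add0r.
rewrite mem_cat negb_or => /andP[/andP[rl rC] ulC] sk.
have sC : (size C < k)%N by move: sk => /= sk; lia.
rewrite (negbTE rC) sC.
have u' : uniq (l ++ r :: C) by rewrite -cat1s uniq_catCA /= mem_cat negb_or rl rC ulC.
have sk' : (size (r :: C) + size l <= k)%N by rewrite /= addSn -addnS.
by rewrite IH // rev_cons cat_rcons -nat1r addrA.
Qed.

Definition amaxd (R : realType) (f : nat -> R) (d : nat) (l : seq nat) : nat :=
  foldr (fun y z => if f z < f y then y else z) d l.

Lemma amaxd_spec (R : realType) (f : nat -> R) d l :
  amaxd f d l \in d :: l /\ (forall y, y \in d :: l -> f y <= f (amaxd f d l)).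
Proof.
elim: l => [|a l [IHm IHi]] /=.
  by split; [rewrite mem_head | move=> y; rewrite inE => /eqP->].
rewrite /amaxd /= -/(amaxd f d l).
case: ifPn => lt; split.
- by rewrite !inE eqxx orbT.
- move=> y; rewrite !inE => /or3P[/eqP->|/eqP->|yl].
  + exact: le_trans (IHi d (mem_head _ _)) (ltW lt).
  + by [].
  + by apply: le_trans (IHi y _) (ltW lt); rewrite inE yl orbT.
- by move: IHm; rewrite !inE => /orP[->|->]; rewrite ?orbT.
- move=> y; rewrite !inE => /or3P[/eqP->|/eqP->|yl].
  + exact: IHi (mem_head _ _).
  + by rewrite leNgt.
  + by apply: IHi; rewrite inE yl orbT.
Qed.

Definition amax (R : realType) (f : nat -> R) (l : seq nat) : nat := amaxd f (head 0%N l) l.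

Lemma amax_mem (R : realType) (f : nat -> R) l : l != [::] -> amax f l \in l.
Proof.
case: l => // a l _; have [m _] := amaxd_spec f a (a :: l).
by move: m; rewrite /amax /= inE => /orP[/eqP->|]; rewrite ?mem_head.
Qed.

Lemma amax_ge (R : realType) (f : nat -> R) l y : y \in l -> f y <= f (amax f l).
Proof.
move=> yl; have [_ i] := amaxd_spec f (head 0%N l) l.
by apply: i; rewrite inE yl orbT.
Qed.

Lemma harmS (R : realType) m : harmonic R m.+1 = harmonic R m + (m.+1%:R)^-1.
Proof. by rewrite /harmonic big_nat_recr. Qed.

Lemma harm1 (R : realType) : harmonic R 1 = 1.
Proof. by rewrite /harmonic big_nat1 invr1. Qed.

Lemma harm_ge0 (R : realType) m : 0 <= harmonic R m.
Proof. by rewrite /harmonic; apply: sumr_ge0 => i _; rewrite invr_ge0 ler0n. Qed.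

Lemma sum_const_seq (R : realType) (T : Type) (l : seq T) (c : R) :
  \sum_(z <- l) c = (size l)%:R * c.
Proof.
elim: l => [|a l IH]; first by rewrite big_nil mul0r.
by rewrite big_cons IH /= -nat1r mulrDl mul1r.
Qed.

Definition sw0 (M : seq nat) : seq (nat * bool) := [seq (m, false) | m <- M].

Fixpoint steps (R : realType) k (A : alg R) h0 C0 (n : nat) (t : seq (nat * bool))
    (M Un : seq nat) : seq nat * seq nat * seq nat :=
  match n with
  | 0 => ([::], M, Un)
  | n'.+1 =>
      let t1 := t ++ sw0 M in
      let y := amax (hole k A h0 C0 t1) Un in
      let res := steps k A h0 C0 n' (rcons t1 (y, false)) (y :: M) (rem y Un) in
      (M ++ y :: res.1.1, res.1.2, res.2)
  end.

Lemma perm_step (M Un U : seq nat) y : y \in Un -> perm_eq (M ++ Un) U ->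
  perm_eq ((y :: M) ++ rem y Un) U.
Proof.
move=> yU P; rewrite /= -cat1s (perm_catCA [:: y] M (rem y Un)) /=.
apply: perm_trans P; rewrite perm_cat2l perm_sym; exact: perm_to_rem.
Qed.

Lemma steps_struct (R : realType) k (A : alg R) h0 C0 n t (M Un : seq nat) :
  perm_eq (M ++ Un) (iota 0 k.+1) -> (n < size Un)%N ->
  let res := steps k A h0 C0 n t M Un in
  [/\ perm_eq (res.1.2 ++ res.2) (iota 0 k.+1), size res.2 = (size Un - n)%N,
      {subset res.1.1 <= res.1.2} & {subset M <= res.1.2}].
Proof.
elim: n t M Un => [|n IH] t M Un P sz /=.
  by split => //; rewrite subn0.
set y := amax _ Un.
have yU : y \in Un by apply: amax_mem; case: (Un) sz.
have sz' : (n < size (rem y Un))%N by rewrite size_rem //; move: sz; case: (size Un) => //.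
have [P' s' sub1 sub2] := IH (rcons (t ++ sw0 M) (y, false)) (y :: M) (rem y Un)
  (perm_step yU P) sz'.
split => //.
- rewrite s' size_rem //; slia.
- move=> z; rewrite mem_cat => /orP[zM|]; first by apply: sub2; rewrite inE zM orbT.
  rewrite inE => /orP[/eqP->|]; last exact: sub1.
  by apply: sub2; exact: mem_head.
- by move=> z zM; apply: sub2; rewrite inE zM orbT.
Qed.

Lemma reqU_cat k (s1 s2 : seq (nat * bool)) : reqU k (s1 ++ s2) = reqU k s1 && reqU k s2.
Proof. by rewrite /reqU all_cat. Qed.

Lemma reqU_map k (l : seq nat) b : all (fun y => y < k.+1)%N l -> reqU k [seq (y, b) | y <- l].
Proof. by move=> H; rewrite /reqU all_map. Qed.

Lemma key_step (R : realType) k (A : alg R) h0 C0 t (M Un : seq nat) :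
  valid_alg k A -> InvU k C0 -> reqU k t -> perm_eq (M ++ Un) (iota 0 k.+1) -> Un != [::] ->
  exp_cost k A h0 C0 t + ((size Un)%:R)^-1 <=
  exp_cost k A h0 C0 (rcons (t ++ sw0 M) (amax (hole k A h0 C0 (t ++ sw0 M)) Un, false)).
Proof.
move=> vA IC rt P Un0.
have aU : all (fun y => y < k.+1)%N (M ++ Un).
  by apply/allP => y; rewrite (perm_mem P) mem_iota.
have uM : uniq M.
  by have := perm_uniq P; rewrite iota_uniq cat_uniq => /and3P[].
have rM : reqU k (sw0 M) by apply: reqU_map; move: aU; rewrite all_cat => /andP[].
have rt1 : reqU k (t ++ sw0 M) by rewrite reqU_cat rt rM.
set t1 := t ++ sw0 M.
set y := amax _ Un.
have yU : y \in Un by exact: amax_mem.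
set c := exp_cost k A h0 C0 t1 - exp_cost k A h0 C0 t.
have hM : \sum_(m <- M) hole k A h0 C0 t1 m <= c.
  have := @sweep_cost R k A h0 C0 t (sw0 M) vA IC rt rM.
  by rewrite /sw0 -map_comp map_id => H; apply: H.
have hsum : \sum_(m <- M) hole k A h0 C0 t1 m + \sum_(z <- Un) hole k A h0 C0 t1 z = 1.
  by rewrite -big_cat (perm_big _ P) hole_sum.
have c0 : 0 <= c.
  apply: le_trans hM; rewrite big_seq; apply: sumr_ge0 => m _; exact: hole_ge0.
have hmax : \sum_(z <- Un) hole k A h0 C0 t1 z <= (size Un)%:R * hole k A h0 C0 t1 y.
  rewrite -sum_const_seq; apply: lersum => z zU; exact: amax_ge.
have u1 : 1 <= ((size Un)%:R : R) by rewrite ler1n; case: (Un) Un0.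
have u0 : 0 < ((size Un)%:R : R) by apply: lt_le_trans u1; exact: ltr01.
rewrite cost_rcons -/y.
have key : 1 <= (size Un)%:R * (c + hole k A h0 C0 t1 y) by nra.
have : (size Un)%:R^-1 <= c + hole k A h0 C0 t1 y.
  by rewrite -[_^-1]mulr1 ler_pdivrMl.
rewrite /c; lra.
Qed.

Lemma steps_cost (R : realType) k (A : alg R) h0 C0 n t (M Un : seq nat) :
  valid_alg k A -> InvU k C0 -> reqU k t ->
  perm_eq (M ++ Un) (iota 0 k.+1) -> (n < size Un)%N ->
  exp_cost k A h0 C0 t + (harmonic R (size Un) - harmonic R (size Un - n)) <=
  exp_cost k A h0 C0 (t ++ [seq (y, false) | y <- (steps k A h0 C0 n t M Un).1.1]).
Proof.
move=> vA IC; elim: n t M Un => [|n IH] t M Un rt P sz /=.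
  by rewrite subn0 subrr addr0 cats0.
set y := amax _ Un.
have Un0 : Un != [::] by case: (Un) sz.
have yU : y \in Un by apply: amax_mem.
have aU : all (fun y => y < k.+1)%N (M ++ Un).
  by apply/allP => z; rewrite (perm_mem P) mem_iota.
have rM : reqU k (sw0 M) by apply: reqU_map; move: aU; rewrite all_cat => /andP[].
have yk : (y < k.+1)%N by apply: (allP aU); rewrite mem_cat yU orbT.
have rt1 : reqU k (rcons (t ++ sw0 M) (y, false)).
  by rewrite -cats1 !reqU_cat rt rM /reqU /= yk.
have sz' : (n < size (rem y Un))%N by rewrite size_rem //; move: sz; case: (size Un) => //.
have := IH _ _ _ rt1 (perm_step yU P) sz'.
have := @key_step R k A h0 C0 t M Un vA IC rt P Un0; rewrite -/y.
rewrite map_cat /= -/(sw0 M) catA -cat_rcons.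
move=> Hk HI.
rewrite size_rem // in HI.
have -> : (size Un - n.+1 = (size Un).-1 - n)%N by slia.
have -> : harmonic R (size Un) = harmonic R (size Un).-1 + ((size Un)%:R)^-1.
  have u0 : (0 < size Un)%N by rewrite lt0n size_eq0.
  by rewrite -[in LHS](prednK u0) harmS prednK.
lra.
Qed.

Definition phase (R : realType) k (A : alg R) h0 C0 (t : seq (nat * bool)) (x : nat) : blk :=
  let res := steps k A h0 C0 k.-1 (rcons t (x, false)) [:: x] (rem x (iota 0 k.+1)) in
  (x :: res.1.1, res.1.2, head 0%N res.2).

Lemma phase_struct (R : realType) k (A : alg R) h0 C0 t x : (0 < k)%N -> (x < k.+1)%N ->
  let res := steps k A h0 C0 k.-1 (rcons t (x, false)) [:: x] (rem x (iota 0 k.+1)) in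
  [/\ perm_eq (res.1.2 ++ [:: head 0%N res.2]) (iota 0 k.+1),
      {subset res.1.1 <= res.1.2}, x \in res.1.2 &
      goodb k x (phase k A h0 C0 t x)].
Proof.
move=> k0 xk res.
have xU : x \in iota 0 k.+1 by rewrite mem_iota.
have P0 : perm_eq ([:: x] ++ rem x (iota 0 k.+1)) (iota 0 k.+1).
  by rewrite perm_sym; exact: perm_to_rem.
have sz : (k.-1 < size (rem x (iota 0 k.+1)))%N by rewrite size_rem // size_iota; slia.
have [P s sub1 sub2] := @steps_struct R k A h0 C0 k.-1 (rcons t (x, false)) [:: x] (rem x (iota 0 k.+1)) P0 sz.
rewrite -/res in P s sub1 sub2.
have s1 : size res.2 = 1%N by rewrite s size_rem // size_iota; slia.
have e2 : res.2 = [:: head 0%N res.2] by case: (res.2) s1 => // a [].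
rewrite e2 in P.
have xM : x \in res.1.2 by apply: sub2; exact: mem_head.
split => //.
set x' := head 0%N res.2 in P *.
have x'U : x' \in iota 0 k.+1 by rewrite -(perm_mem P) mem_cat mem_head orbT.
have -> : phase k A h0 C0 t x = (x :: res.1.1, res.1.2, x') by [].
apply/and5P; split.
- by [].
- by rewrite /= eqxx.
- apply/allP => z; rewrite [_.1.1]/= inE => /orP[/eqP->//|]; exact: sub1.
- rewrite [_.1.2]/= [_.2]/= -(perm_cat2r [:: x']); apply: perm_trans P _.
  by rewrite perm_sym cats1 perm_rcons perm_sym; exact: perm_to_rem.
- by move: x'U; rewrite mem_iota.
Qed.

Lemma phase_cost (R : realType) k (A : alg R) h0 C0 t x b :
  valid_alg k A -> InvU k C0 -> reqU k t -> (0 < k)%N -> (x < k.+1)%N ->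
  exp_cost k A h0 C0 t + hole k A h0 C0 t x + harmonic R k <=
  exp_cost k A h0 C0 (t ++ pairs b (phase k A h0 C0 t x)) +
  hole k A h0 C0 (t ++ pairs b (phase k A h0 C0 t x)) (phase k A h0 C0 t x).2.
Proof.
move=> vA IC rt k0 xk; set B := phase k A h0 C0 t x.
have := @phase_struct R k A h0 C0 t x k0 xk.
set res := steps _ _ _ _ _ _ _ _.
move=> [P sub1 xM gB].
have xU : x \in iota 0 k.+1 by rewrite mem_iota.
have aM : all (fun y => y < k.+1)%N res.1.2.
  apply/allP => z zM; have : z \in iota 0 k.+1 by rewrite -(perm_mem P) mem_cat zM.
  by rewrite mem_iota.
have rta : reqU k (rcons t (x, false)) by rewrite -cats1 reqU_cat rt /reqU /= xk.
have P0 : perm_eq ([:: x] ++ rem x (iota 0 k.+1)) (iota 0 k.+1).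
  by rewrite perm_sym; exact: perm_to_rem.
have sz : (k.-1 < size (rem x (iota 0 k.+1)))%N by rewrite size_rem // size_iota; slia.
have Hs := @steps_cost R k A h0 C0 k.-1 (rcons t (x, false)) [:: x] (rem x (iota 0 k.+1)) vA IC rta P0 sz.
rewrite -/res size_rem // size_iota /= in Hs.
have e1 : (k - k.-1)%N = 1%N by slia.
rewrite e1 harm1 in Hs.
have rb : reqU k [seq (y, false) | y <- res.1.1].
  by apply: reqU_map; apply/allP => z /sub1 zM; exact: (allP aM).
have rtb : reqU k (rcons t (x, false) ++ [seq (y, false) | y <- res.1.1]).
  by rewrite reqU_cat rta rb.
have rL : reqU k [seq (y, b) | y <- res.1.2] by exact: reqU_map.
have uM : uniq res.1.2.
  by have := perm_uniq P; rewrite iota_uniq cat_uniq => /and3P[].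
have Hsw := @sweep_cost R k A h0 C0 _ [seq (y, b) | y <- res.1.2] vA IC rtb rL.
rewrite -map_comp map_id in Hsw; have {}Hsw := Hsw uM.
have tE : t ++ pairs b B =
    (rcons t (x, false) ++ [seq (y, false) | y <- res.1.1]) ++ [seq (y, b) | y <- res.1.2].
  by rewrite /pairs /B /phase /= -/res -cats1 -!catA.
have rc : reqU k (t ++ pairs b B) by rewrite tE reqU_cat rtb rL.
have hs := @hole_sum R k A h0 C0 _ vA IC rc.
rewrite -(perm_big _ P) big_cat big_seq1 /= in hs.
rewrite tE in hs *.
have -> : B.2 = head 0%N res.2 by [].
rewrite cost_rcons in Hs.
lra.
Qed.

Fixpoint advB (R : realType) k (A : alg R) h0 C0 (b : bool) (n : nat)
    (t : seq (nat * bool)) (x : nat) : seq blk :=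
  match n with
  | 0 => [::]
  | n'.+1 => let B := phase k A h0 C0 t x in
             B :: advB k A h0 C0 b n' (t ++ pairs b B) B.2
  end.

Lemma reqU_pairs k x b B : goodb k x B -> reqU k (pairs b B).
Proof.
move=> gB; have [_ sub [_ _ ms] _ _] := goodb_facts gB.
have aw : all (fun y => y < k.+1)%N B.1.2 by apply/allP => y; rewrite ms => /andP[].
rewrite /pairs reqU_cat !reqU_map //; apply/allP => y /sub yw; exact: (allP aw).
Qed.

Lemma adv_prop (R : realType) k (A : alg R) h0 C0 b :
  valid_alg k A -> InvU k C0 -> (0 < k)%N ->
  forall n t x, reqU k t -> (x < k.+1)%N ->
  [/\ goodBs k x (advB k A h0 C0 b n t x), size (advB k A h0 C0 b n t x) = n &
  exists xe, exp_cost k A h0 C0 t + hole k A h0 C0 t x + n%:R * harmonic R k <=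
    exp_cost k A h0 C0 (t ++ flatten (map (pairs b) (advB k A h0 C0 b n t x))) +
    hole k A h0 C0 (t ++ flatten (map (pairs b) (advB k A h0 C0 b n t x))) xe].
Proof.
move=> vA IC k0; elim=> [|n IH] t x rt xk.
  by split => //; exists x; rewrite /= mul0r addr0 cats0.
set B := phase k A h0 C0 t x.
have -> : advB k A h0 C0 b n.+1 t x = B :: advB k A h0 C0 b n (t ++ pairs b B) B.2 by [].
have [_ _ _ gB] := @phase_struct R k A h0 C0 t x k0 xk.
rewrite -/B in gB.
have rB : reqU k (t ++ pairs b B) by rewrite reqU_cat rt (reqU_pairs b gB).
have xk' : (B.2 < k.+1)%N by case/and5P: gB.
have [gBs sz [xe H]] := IH (t ++ pairs b B) B.2 rB xk'.
split; [by rewrite /= gB gBs | by rewrite /= sz |].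
exists xe.
have -> : flatten (map (pairs b) (B :: advB k A h0 C0 b n (t ++ pairs b B) B.2)) =
  pairs b B ++ flatten (map (pairs b) (advB k A h0 C0 b n (t ++ pairs b B) B.2)) by [].
rewrite catA.
have Hp := @phase_cost R k A h0 C0 t x b vA IC rt k0 xk; rewrite -/B in Hp.
rewrite -nat1r mulrDl mul1r; lra.
Qed.

Lemma reqU_flat k b : forall Bs x, goodBs k x Bs -> reqU k (flatten (map (pairs b) Bs)).
Proof.
elim=> //= B L IHL x /andP[gB gL].
by rewrite reqU_cat (reqU_pairs b gB) (IHL _ gL).
Qed.

Lemma InvU0 k : InvU k (rev (iota 0 k) ++ [::]).
Proof.
rewrite cats0; apply/and3P; split; first by rewrite rev_uniq iota_uniq.
  by rewrite size_rev size_iota.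
by apply/allP => y; rewrite mem_rev mem_iota /= add0n => /ltnW.
Qed.

Lemma lower (R : realType) k (A : alg R) b n : valid_alg k A -> (0 < k)%N ->
  let Bs := advB k A (fillh [::] [::] b (iota 0 k)) (rev (iota 0 k) ++ [::]) b n [::] k in
  [/\ goodBs k k Bs, size Bs = n &
   n%:R * harmonic R k - 1 <= exp_cost k A [::] [::] (flatten (map (pairs b) (B0 k :: Bs)))].
Proof.
move=> vA k0 Bs.
set h0 := fillh [::] [::] b (iota 0 k).
set C0 := rev (iota 0 k) ++ [::].
have IC : InvU k C0 by exact: InvU0.
have [gBs sz [xe H]] := @adv_prop R k A h0 C0 b vA IC k0 n [::] k (erefl _) (ltnSn k).
split => //.
have u0 : uniq (iota 0 k ++ [::]) by rewrite cats0 iota_uniq.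
have s0 : (size (@nil nat) + size (iota 0 k) <= k)%N by rewrite size_iota.
have -> : flatten (map (pairs b) (B0 k :: Bs)) =
   [seq (y, b) | y <- iota 0 k] ++ flatten (map (pairs b) Bs) by [].
rewrite exp_fill // -/h0 -/C0.
have rt : reqU k (flatten (map (pairs b) Bs)) by exact: reqU_flat gBs.
have hl0 : 0 <= hole k A h0 C0 [::] k by apply: hole_ge0.
have hl1 : hole k A h0 C0 (flatten (map (pairs b) Bs)) xe <= 1 by apply: hole_le1.
have e0 : exp_cost k A h0 C0 [::] = 0 by [].
rewrite e0 /= in H.
rewrite size_iota; have := ler0n R k; lra.
Qed.

Lemma contra_gen (R : realType) (H e K : R) : 0 < e ->
  (forall n : nat, n%:R * H - 1 <= (H - e) * n%:R + K) -> False.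
Proof.
move=> e0 Hn.
set N := Num.bound `|(K + 1) / e|.
have hN := archi_boundP (normr_ge0 ((K + 1) / e)).
have h1 : (K + 1) / e < N%:R := le_lt_trans (ler_norm _) hN.
rewrite ltr_pdivrMr // in h1.
have := Hn N; lra.
Qed.

Lemma main_gen (R : realType) k (A : alg R) (eta : seq (nat * bool) -> bool -> nat)
    (eps beta gamma : R) :
  (1 <= k)%N -> 0 < eps -> valid_alg k A ->
  (forall b hb Bs, goodBs k k Bs ->
     (eta (flatten (map (pairs b) (B0 k :: Bs))) hb <= (size Bs).+1 * nl k hb b + la k hb b)%N) ->
  ~ competitive k eta A 2 (harmonic R k - 2 - eps) gamma /\
  ~ competitive k eta A 2 beta ((harmonic R k - 2) / (k%:R - 1) - eps).
Proof.
move=> hk e0 vA Heta; split.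
- case => _ hb hc [b0 Hb0].
  apply: (@contra_gen R (harmonic R k) eps (2 * k%:R + (harmonic R k - 2 - eps) + b0)) => // n.
  have [gBs sz Hl] := @lower R k A false n vA hk.
  set Bs := advB _ _ _ _ _ _ _ _ in gBs sz Hl.
  have HB := Hb0 (flatten (map (pairs false) (B0 k :: Bs))).
  have ho := opt_full false gBs.
  have h0 := Heta false false Bs gBs; have h1 := Heta false true Bs gBs.
  rewrite sz [nl _ _ _]/= [la _ _ _]/= muln1 muln0 !addn0 in h0 h1; rewrite sz in ho.
  move: h1; rewrite leqn0 => /eqP e1; rewrite e1 in HB.
  have r0 : ((opt_cost k [::] (unzip1 (flatten (map (pairs false) (B0 k :: Bs)))))%:R : R)
            <= k%:R + n%:R by rewrite -natrD ler_nat.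
  have r1 : ((eta (flatten (map (pairs false) (B0 k :: Bs))) false)%:R : R) <= n%:R + 1.
    by rewrite natr1 ler_nat.
  have r1' := ler_wpM2l hb r1.
  move: HB Hl r0 r1'; rewrite mulr0; lra.
- case => _ hb hc [b0 Hb0].
  have [k1|k2] : k = 1%N \/ (2 <= k)%N by slia.
    move: hc; rewrite k1 subrr invr0 mulr0; lra.
  set d := (k%:R - 1 : R).
  have d0 : 0 < d by rewrite /d subr_gt0 ltr1n.
  set g := (harmonic R k - 2) / d - eps.
  have gd : g * d = harmonic R k - 2 - eps * d.
    by rewrite /g mulrBl divfK // gt_eqF.
  apply: (@contra_gen R (harmonic R k) (eps * d)
    (2 * k%:R + (harmonic R k - 2 - eps * d) + g * k%:R + b0)); first exact: mulr_gt0.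
  move=> n.
  have [gBs sz Hl] := @lower R k A true n vA (ltnW k2).
  set Bs := advB _ _ _ _ _ _ _ _ in gBs sz Hl.
  have HB := Hb0 (flatten (map (pairs true) (B0 k :: Bs))).
  have ho := opt_full true gBs.
  have h0 := Heta true false Bs gBs; have h1 := Heta true true Bs gBs.
  rewrite sz [nl _ _ _]/= [la _ _ _]/= muln0 !addn0 in h0 h1; rewrite sz in ho.
  move: h0; rewrite leqn0 => /eqP e1; rewrite e1 in HB.
  have r0 : ((opt_cost k [::] (unzip1 (flatten (map (pairs true) (B0 k :: Bs)))))%:R : R)
            <= k%:R + n%:R by rewrite -natrD ler_nat.
  have dk : (k.-1)%:R = d :> R.
    by rewrite /d -[in RHS](prednK (ltnW k2)) -natr1 addrK.
  have r1 : ((eta (flatten (map (pairs true) (B0 k :: Bs))) true)%:R : R)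
            <= (n%:R + 1) * d + k%:R.
    by rewrite -dk natr1 -natrM -natrD ler_nat.
  have r1' := ler_wpM2l hc r1.
  have eq : g * ((n%:R + 1) * d + k%:R) = (g * d) * (n%:R + 1) + g * k%:R.
    by ring.
  rewrite eq gd in r1'.
  move: HB Hl r0 r1'; rewrite mulr0; lra.
Qed.

Theorem corollary2 (R : realType) (k : nat) (hk : (1 <= k)%N)
    (eps : R) (heps : 0 < eps) (beta gamma : R) :
  (forall tb : seq nat -> nat, valid_tb tb ->
   forall A : alg R, valid_alg k A ->
     ~ competitive k (eta_discard k tb) A 2 (harmonic R k - 2 - eps) gamma /\
     ~ competitive k (eta_discard k tb) A 2 beta
         ((harmonic R k - 2) / (k%:R - 1) - eps)) /\
  (forall A : alg R, valid_alg k A ->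
     ~ competitive k (eta_phase k) A 2 (harmonic R k - 2 - eps) gamma /\
     ~ competitive k (eta_phase k) A 2 beta
         ((harmonic R k - 2) / (k%:R - 1) - eps)).
Proof.
split.
- move=> tb vtb A vA; apply: main_gen => // b hb Bs gBs; exact: etaD_full.
- move=> A vA; apply: main_gen => // b hb Bs gBs; exact: etaP_full.
Qed.
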